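(* Let $\phi_3(x)=\sqrt2\,\mathrm{sech}(x)$, $T(x)=\int_{\mathbb R}e^{-\sqrt2|x-y|}\mathrm{sech}^2(y)\,dy$, $R_1=-x\phi_3\phi_3'-\tfrac{1}{4\sqrt2}(3-\phi_3^2)T-\tfrac{\phi_3'}{2\sqrt2\phi_3}T'$, $R_2=\tfrac12\phi_3^2+\tfrac{3}{4\sqrt2}T+\tfrac{\phi_3'}{2\sqrt2\phi_3}T'$, $E=\tfrac12\phi_3(\tfrac14-\log\phi_3)+\tfrac12x\phi_3'$, $F=E+\phi_3\log\phi_3$, $\Delta_1=F(3(1-\phi_3^2)^2-1)+\phi_3(1-\phi_3^2)^2+6\phi_3(1-\phi_3^2)R_1-2\phi_3R_2$, $\Delta_2=F(1-\phi_3^2)+\phi_3R_1+\phi_3(1-\phi_3^2)R_2$, $h_{3,1}=\tfrac12\phi_3^2\cos x+\tfrac{\phi_3'}{\phi_3}\sin x$, $h_{3,2}=\tfrac{\phi_3'}{\phi_3}\sin x$, and with $\langle f,g\rangle=\int_{\mathbb R}fg\,dx$ set $\gamma_1=\langle\Delta_1,h_{3,1}\rangle$, $\gamma_2=2\langle\Delta_2,h_{3,2}\rangle$, $\gamma_3=\langle(6x\tanh x\,\mathrm{sech}^2x-\tfrac72\mathrm{sech}^2x)\phi_3(1-\phi_3^2),h_{3,1}\rangle$, $\gamma_4=-2\langle E,h_{3,1}\rangle$. For integers $k\ge1$ set (integrals over $\mathbb R$ in $x$) $p_k=\int\mathrm{sech}^k\cos$, $q_k=\int\mathrm{sech}^k\log(\mathrm{sech})\cos$,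 $r_k=\int\mathrm{sech}^kT\cos$, $s_k=\int\mathrm{sech}^kT\tanh\sin$, $a_k=\int x\,\mathrm{sech}^k\tanh\cos$. Then \begin{align*} \gamma_1=&\sqrt2\Big(2p_1+\big(-9\log2-\tfrac{97}{2}\big)p_3+(24\log2+110)p_5+\big(-15\log2-\tfrac{127}{2}\big)p_7\Big)\\ &+\sqrt2\big(q_1-19q_3+48q_5-30q_7-a_1+56a_3-222a_5+180a_7\big)\\ &+4r_1-4r_3-28r_5+30r_7+2s_1+22s_3-30s_5,\\ \gamma_2=&\sqrt2\Big(\big(\tfrac12\log2+\tfrac94\big)p_1+(-4\log2-6)p_3+(4\log2-18)p_5+24p_7\Big)\\ &+\sqrt2\big(q_1-8q_3+8q_5-a_1+21a_3-30a_5\big)+2r_3-2r_5-4s_3+10s_5,\\ \gamma_3=&\sqrt2\Big(-\tfrac{33}{2}p_3+\tfrac{127}{2}p_5-47p_7+18a_3-84a_5+72a_7\Big),\\ \gamma_4=&\sqrt2\big(q_1-q_3+a_1-2a_3\big). \end{align*}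
   Context: $\mathrm{sech},\tanh,\cos,\sin$ denote the functions $\mathrm{sech}(x),\tanh(x),\cos(x),\sin(x)$, products are pointwise, primes denote $d/dx$. *)

(* Defs.v *)
From Stdlib Require Import Reals.
From Coquelicot Require Import Coquelicot.
Open Scope R_scope.

Definition sech (x : R) : R := / cosh x.

Definition Integral (f : R -> R) : R :=
  RInt_gen f (Rbar_locally m_infty) (Rbar_locally p_infty).

Definition ip (f g : R -> R) : R := Integral (fun x => f x * g x).

Definition phi3 (x : R) : R := sqrt 2 * sech x.
Definition dphi3 (x : R) : R := Derive phi3 x.

Definition T (x : R) : R :=
  Integral (fun y => exp (- sqrt 2 * Rabs (x - y)) * (sech y) ^ 2).
Definition dT (x : R) : R := Derive T x.

Definition R1 (x : R) : R :=
  - x * phi3 x * dphi3 x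
  - / (4 * sqrt 2) * (3 - phi3 x ^ 2) * T x
  - dphi3 x / (2 * sqrt 2 * phi3 x) * dT x.

Definition R2 (x : R) : R :=
  / 2 * phi3 x ^ 2 + 3 / (4 * sqrt 2) * T x
  + dphi3 x / (2 * sqrt 2 * phi3 x) * dT x.

Definition E (x : R) : R :=
  / 2 * phi3 x * (/ 4 - ln (phi3 x)) + / 2 * x * dphi3 x.

Definition F (x : R) : R := E x + phi3 x * ln (phi3 x).

Definition Delta1 (x : R) : R :=
  F x * (3 * (1 - phi3 x ^ 2) ^ 2 - 1) + phi3 x * (1 - phi3 x ^ 2) ^ 2
  + 6 * phi3 x * (1 - phi3 x ^ 2) * R1 x - 2 * phi3 x * R2 x.

Definition Delta2 (x : R) : R :=
  F x * (1 - phi3 x ^ 2) + phi3 x * R1 x + phi3 x * (1 - phi3 x ^ 2) * R2 x.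

Definition h31 (x : R) : R :=
  / 2 * phi3 x ^ 2 * cos x + dphi3 x / phi3 x * sin x.
Definition h32 (x : R) : R := dphi3 x / phi3 x * sin x.

Definition gamma1 : R := ip Delta1 h31.
Definition gamma2 : R := 2 * ip Delta2 h32.
Definition gamma3 : R :=
  ip (fun x => (6 * x * tanh x * sech x ^ 2 - 7 / 2 * sech x ^ 2)
                * phi3 x * (1 - phi3 x ^ 2)) h31.
Definition gamma4 : R := - 2 * ip E h31.

Definition p (k : nat) : R := Integral (fun x => sech x ^ k * cos x).
Definition q (k : nat) : R := Integral (fun x => sech x ^ k * ln (sech x) * cos x).
Definition r (k : nat) : R := Integral (fun x => sech x ^ k * T x * cos x).
Definition s (k : nat) : R := Integral (fun x => sech x ^ k * T x * tanh x * sin x).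
Definition a (k : nat) : R := Integral (fun x => x * sech x ^ k * tanh x * cos x).

(* Main.v *)
Require Import Defs.
From Stdlib Require Import Reals.
From Coquelicot Require Import Coquelicot.
From Stdlib Require Import Lra Lia Psatz FunctionalExtensionality.
Open Scope R_scope.

Lemma cosh_exp x : cosh x = (exp x + exp (- x)) / 2.
Proof. reflexivity. Qed.

Lemma cosh_ge_exp x : exp (Rabs x) <= 2 * cosh x.
Proof.
  rewrite cosh_exp. pose proof (exp_pos x). pose proof (exp_pos (-x)).
  destruct (Rle_dec 0 x).
  - rewrite Rabs_right by lra. lra.
  - rewrite Rabs_left by lra. lra.
Qed.

Lemma cosh_pos' x : 0 < cosh x.
Proof. pose proof (cosh_ge_exp x). pose proof (exp_pos (Rabs x)). lra. Qed.

Lemma cosh_ge1 x : 1 <= cosh x.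
Proof.
  rewrite cosh_exp.
  assert (exp x * exp (-x) = 1) by (rewrite <- exp_plus; replace (x + -x) with 0 by ring; apply exp_0).
  pose proof (exp_pos x). pose proof (exp_pos (-x)).
  pose proof (pow2_ge_0 (exp x - exp (-x))).
  nra.
Qed.

Lemma sech_pos x : 0 < sech x.
Proof. unfold sech. apply Rinv_0_lt_compat, cosh_pos'. Qed.

Lemma sech_le1 x : sech x <= 1.
Proof.
  unfold sech. pose proof (cosh_ge1 x).
  rewrite <- Rinv_1. apply Rinv_le_contravar; lra.
Qed.

Lemma cosh2_sinh2 x : cosh x ^ 2 - sinh x ^ 2 = 1.
Proof.
  unfold cosh, sinh.
  assert (exp x * exp (-x) = 1) by (rewrite <- exp_plus; replace (x + -x) with 0 by ring; apply exp_0).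
  field_simplify. nra.
Qed.

Lemma tanh_sech x : tanh x * tanh x = 1 - sech x * sech x.
Proof.
  unfold tanh, sech. pose proof (cosh_pos' x). pose proof (cosh2_sinh2 x).
  assert (cosh x <> 0) by lra. field_simplify; try lra. f_equal. lra.
Qed.

Lemma tanh_bound x : Rabs (tanh x) <= 1.
Proof.
  pose proof (tanh_sech x). pose proof (sech_pos x).
  apply Rabs_le. split; nra.
Qed.

Lemma is_derive_sech x : is_derive (fun y => sech y) x (- (sech x * tanh x)).
Proof.
  pose proof (cosh_pos' x).
  unfold sech, tanh. 
  assert (D: is_derive cosh x (sinh x)).
  { apply is_derive_Reals, derivable_pt_lim_cosh. }
  evar (d : R). replace (- (/ cosh x * (sinh x / cosh x))) with d.
  - apply (is_derive_inv cosh). exact D. lra.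
  - unfold d. field. lra.
Qed.

Lemma is_derive_tanh x : is_derive (fun y => tanh y) x (sech x ^ 2).
Proof.
  pose proof (cosh_pos' x). pose proof (cosh2_sinh2 x).
  unfold sech, tanh.
  assert (D: is_derive cosh x (sinh x)).
  { apply is_derive_Reals, derivable_pt_lim_cosh. }
  assert (D2: is_derive sinh x (cosh x)).
  { apply is_derive_Reals, derivable_pt_lim_sinh. }
  evar (d : R). replace ((/ cosh x) ^ 2) with d.
  - apply (is_derive_div sinh cosh). exact D2. exact D. lra.
  - unfold d. field_simplify; try lra. f_equal. simpl in *. lra.
Qed.

Lemma ex_derive_sech x : ex_derive (fun y => sech y) x.
Proof. eexists; apply is_derive_sech. Qed.
Lemma ex_derive_tanh x : ex_derive (fun y => tanh y) x.
Proof. eexists; apply is_derive_tanh. Qed.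
Lemma Derive_sech x : Derive (fun y => sech y) x = - (sech x * tanh x).
Proof. apply is_derive_unique, is_derive_sech. Qed.
Lemma Derive_tanh x : Derive (fun y => tanh y) x = sech x ^ 2.
Proof. apply is_derive_unique, is_derive_tanh. Qed.

Lemma key_bound x : (1 + Rabs x) ^ 3 * sech x <= 128.
Proof.
  set (a := Rabs x).
  assert (Ha : 0 <= a) by apply Rabs_pos.
  assert (E4 : exp a = exp (a/4) ^ 4).
  { simpl. rewrite Rmult_1_r, <- !exp_plus. f_equal. field. }
  assert (B1 : 1 + a/4 <= exp (a/4)) by apply exp_ineq1_le.
  assert (B2 : (1 + a/4) ^ 4 <= exp (a/4) ^ 4).
  { apply pow_incr. lra. }
  assert (B3 : (1 + a) ^ 3 <= 64 * (1 + a/4) ^ 4).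
  { assert (1 + a <= 4 * (1 + a/4)) by lra.
    assert ((1+a)^3 <= (4 * (1 + a/4))^3) by (apply pow_incr; lra).
    assert ((1 + a/4)^3 <= (1+a/4)^4).
    { simpl. assert (0 <= (1+a/4)*((1+a/4)*((1+a/4)*1))) by (repeat apply Rmult_le_pos; lra). nra. }
    replace ((4 * (1 + a/4))^3) with (64 * (1+a/4)^3) in H0 by ring. lra. }
  pose proof (cosh_ge_exp x). fold a in H.
  pose proof (cosh_pos' x).
  unfold sech. 
  apply (Rmult_le_reg_r (cosh x)); auto.
  rewrite Rmult_assoc, Rinv_l by lra. lra.
Qed.

Lemma key_bound2 x : (1 + x ^ 2) * ((1 + Rabs x) * sech x) <= 128.
Proof.
  pose proof (key_bound x). pose proof (sech_pos x). pose proof (Rabs_pos x).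
  assert (x ^ 2 = Rabs x ^ 2) by (rewrite pow2_abs; auto).
  rewrite H2.
  assert ((1 + Rabs x ^ 2) * (1 + Rabs x) <= (1 + Rabs x) ^ 3) by (simpl; nra).
  nra.
Qed.

Lemma exp_le x y : x <= y -> exp x <= exp y.
Proof. intros [H|H]. left; apply exp_increasing; auto. subst; lra. Qed.

Lemma ln_sech_bound x : Rabs (ln (sech x)) <= Rabs x.
Proof.
  unfold sech. pose proof (cosh_pos' x). pose proof (cosh_ge1 x).
  rewrite ln_Rinv by lra.
  assert (0 <= ln (cosh x)) by (rewrite <- ln_1; apply ln_le; lra).
  assert (ln (cosh x) <= Rabs x).
  { rewrite <- (ln_exp (Rabs x)). apply ln_le. lra.
    pose proof (cosh_ge_exp x). unfold cosh in *.
    destruct (Rle_dec 0 x).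
    - rewrite Rabs_right by lra. assert (exp (-x) <= exp x) by (apply exp_le; lra). lra.
    - rewrite Rabs_left by lra. assert (exp x <= exp (-x)) by (apply exp_le; lra). lra. }
  rewrite Rabs_Ropp, Rabs_right; lra.
Qed.

Lemma int_inv2 K a b : a <= b -> (0 < a \/ b < 0) ->
  is_RInt (fun t => K / t ^ 2) a b (K / a - K / b).
Proof.
  intros Hab Hs.
  assert (Hn : forall t, a <= t <= b -> t <> 0) by (intros t Ht; destruct Hs; lra).
  replace (K / a - K / b) with ((- K / b) - (- K / a)) by (field; split; apply Hn; lra).
  apply (is_RInt_derive (fun t => - K / t)).
  - intros t Ht. rewrite Rmin_left, Rmax_right in Ht by lra.
    pose proof (Hn t Ht).
    auto_derive; auto. field. auto.
  - intros t Ht. rewrite Rmin_left, Rmax_right in Ht by lra.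
    pose proof (Hn t Ht).
    apply (@ex_derive_continuous R_AbsRing R_NormedModule). auto_derive. auto.
Qed.

Section Dom.
Variable f : R -> R.
Variable K : R.
Hypothesis fc : forall x, continuous f x.
Hypothesis fb : forall x, Rabs (f x) * (1 + x ^ 2) <= K.

Lemma K_pos : 0 <= K.
Proof. pose proof (fb 0). pose proof (Rabs_pos (f 0)). simpl in H. nra. Qed.

Lemma f_exR a b : ex_RInt f a b.
Proof. apply (ex_RInt_continuous (V:=R_CompleteNormedModule)). intros; apply fc. Qed.

Lemma f_bound2 t : t <> 0 -> Rabs (f t) <= K / t ^ 2.
Proof.
  intros Ht. pose proof (fb t). pose proof (Rabs_pos (f t)).
  assert (0 < t ^ 2) by (simpl; nra).
  apply (Rmult_le_reg_r (t^2)); auto.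
  unfold Rdiv. rewrite Rmult_assoc, Rinv_l by lra. nra.
Qed.

Lemma tail a b : a <= b -> (1 <= a \/ b <= -1) -> Rabs (RInt f a b) <= K / a - K / b.
Proof.
  intros Hab Hs.
  eapply Rle_trans. apply abs_RInt_le; auto. apply f_exR.
  assert (HI := int_inv2 K a b Hab ltac:(lra)).
  rewrite <- (is_RInt_unique _ _ _ _ HI).
  apply RInt_le; auto.
  - apply (ex_RInt_continuous (V:=R_CompleteNormedModule)). intros. apply continuous_comp. apply fc.
    apply continuous_Rabs.
  - eexists; eauto.
  - intros t Ht. apply f_bound2. lra.
Qed.

Lemma cauchy_p eps : 0 < eps -> exists M, forall u v, M < u -> M < v -> Rabs (RInt f u v) < eps.
Proof.
  intros He. pose proof K_pos.
  exists (1 + K / eps). intros u v Hu Hv.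
  assert (0 <= K / eps) by (apply Rdiv_le_0_compat; lra).
  assert (Hkm : forall w, 1 + K / eps < w -> K / w < eps).
  { intros w Hw. apply (Rmult_lt_reg_r w). lra. unfold Rdiv. rewrite Rmult_assoc, Rinv_l by lra.
    assert (K / eps * eps = K) by (field; lra). nra. }
  destruct (Rle_dec u v).
  - pose proof (tail u v r ltac:(lra)).
    assert (0 <= K / v) by (apply Rdiv_le_0_compat; lra).
    pose proof (Hkm u Hu). lra.
  - rewrite <- (opp_RInt_swap f v u) by apply f_exR. change (Rabs (- RInt f v u) < eps). rewrite Rabs_Ropp.
    pose proof (tail v u ltac:(lra) ltac:(lra)).
    assert (0 <= K / u) by (apply Rdiv_le_0_compat; lra).
    pose proof (Hkm v Hv). lra.
Qed.

Lemma cauchy_m eps : 0 < eps -> exists M, forall u v, u < M -> v < M -> Rabs (RInt f u v) < eps.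
Proof.
  intros He. pose proof K_pos.
  exists (- (1 + K / eps)). intros u v Hu Hv.
  assert (0 <= K / eps) by (apply Rdiv_le_0_compat; lra).
  assert (Hkm : forall w, w < - (1 + K / eps) -> - (K / w) < eps).
  { intros w Hw. apply (Rmult_lt_reg_r (- w)). lra.
    replace (- (K / w) * - w) with K by (field; lra).
    assert (K / eps * eps = K) by (field; lra). nra. }
  assert (Hneg : forall w, w < - (1 + K / eps) -> K / w <= 0).
  { intros w Hw. unfold Rdiv. assert (/ w < 0) by (apply Rinv_lt_0_compat; lra). nra. }
  destruct (Rle_dec u v).
  - pose proof (tail u v r ltac:(lra)).
    pose proof (Hneg u Hu). pose proof (Hkm v Hv). lra.
  - rewrite <- (opp_RInt_swap f v u) by apply f_exR. change (Rabs (- RInt f v u) < eps). rewrite Rabs_Ropp.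
    pose proof (tail v u ltac:(lra) ltac:(lra)).
    pose proof (Hneg v Hv). pose proof (Hkm u Hu). lra.
Qed.

Lemma lim_p : exists l, filterlim (fun y => RInt f 0 y) (Rbar_locally p_infty) (locally l).
Proof.
  apply (filterlim_locally_cauchy (F := Rbar_locally p_infty)).
  intros eps. destruct (cauchy_p eps (cond_pos eps)) as [M HM].
  exists (fun y => M < y). split.
  - exists M. auto.
  - intros u v Hu Hv. change (Rabs (RInt f 0 v - RInt f 0 u) < eps).
    rewrite <- (RInt_Chasles f 0 u v) by apply f_exR.
    change (Rabs (RInt f 0 u + RInt f u v - RInt f 0 u) < eps).
    rewrite (Rplus_comm (RInt f 0 u)). unfold Rminus. rewrite Rplus_assoc, Rplus_opp_r, Rplus_0_r.
    apply HM; auto.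
Qed.

Lemma lim_m : exists l, filterlim (fun y => RInt f 0 y) (Rbar_locally m_infty) (locally l).
Proof.
  apply (filterlim_locally_cauchy (F := Rbar_locally m_infty)).
  intros eps. destruct (cauchy_m eps (cond_pos eps)) as [M HM].
  exists (fun y => y < M). split.
  - exists M. auto.
  - intros u v Hu Hv. change (Rabs (RInt f 0 v - RInt f 0 u) < eps).
    rewrite <- (RInt_Chasles f 0 u v) by apply f_exR.
    change (Rabs (RInt f 0 u + RInt f u v - RInt f 0 u) < eps).
    rewrite (Rplus_comm (RInt f 0 u)). unfold Rminus. rewrite Rplus_assoc, Rplus_opp_r, Rplus_0_r.
    apply HM; auto.
Qed.

Lemma Derive_prim x : Derive (RInt f 0) x = f x.
Proof.
  apply Derive_RInt. apply filter_forall. intros; apply f_exR. apply fc.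
Qed.

Lemma is_derive_prim x : is_derive (RInt f 0) x (f x).
Proof.
  apply (is_derive_RInt f (RInt f 0) 0 x).
  apply filter_forall. intros. apply (RInt_correct (V:=R_CompleteNormedModule)), f_exR. apply fc.
Qed.

Lemma dom_ex : ex_RInt_gen f (Rbar_locally m_infty) (Rbar_locally p_infty).
Proof.
  destruct lim_p as [lb Hb]. destruct lim_m as [la Ha].
  exists (lb - la).
  apply (is_RInt_gen_ext (Derive (RInt f 0))).
  - apply filter_forall. intros. apply Derive_prim.
  - apply is_RInt_gen_Derive; auto.
    + apply filter_forall. intros. eexists. apply is_derive_prim.
    + apply filter_forall. intros. apply (continuous_ext f). intros; symmetry; apply Derive_prim. apply fc.
Qed.

End Dom.

Definition Mi := Rbar_locally m_infty.
Definition Pi := Rbar_locally p_infty.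

Lemma int_sech f K : (forall x, continuous f x) ->
  (forall x, Rabs (f x) <= K * ((1 + Rabs x) * sech x)) ->
  ex_RInt_gen f (Rbar_locally m_infty) (Rbar_locally p_infty).
Proof.
  intros fc fb.
  assert (HK : 0 <= K).
  { pose proof (fb 0). pose proof (Rabs_pos (f 0)). pose proof (sech_pos 0).
    pose proof (Rabs_pos 0). 
    assert (0 < (1 + Rabs 0) * sech 0) by (apply Rmult_lt_0_compat; lra). nra. }
  apply (dom_ex f (K * 128)); auto.
  intros x. pose proof (fb x). pose proof (key_bound2 x).
  assert (0 <= 1 + x ^ 2) by (pose proof (pow2_ge_0 x); lra).
  pose proof (Rabs_pos (f x)).
  apply Rle_trans with (K * ((1 + Rabs x) * sech x) * (1 + x ^ 2)).
  apply Rmult_le_compat_r; auto.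
  replace (K * ((1 + Rabs x) * sech x) * (1 + x ^ 2)) with (K * ((1 + x ^ 2) * ((1 + Rabs x) * sech x))) by ring.
  apply Rmult_le_compat_l; auto.
Qed.

Lemma small_bound K x : 0 <= K -> Rabs (K * ((1 + Rabs x) * sech x)) <= K * 128 / (1 + Rabs x).
Proof.
  intros HK. pose proof (key_bound x). pose proof (sech_pos x). pose proof (Rabs_pos x).
  rewrite Rabs_right.
  2:{ apply Rle_ge. apply Rmult_le_pos; auto. apply Rmult_le_pos; lra. }
  apply (Rmult_le_reg_r (1 + Rabs x)). lra.
  replace (K * 128 / (1 + Rabs x) * (1 + Rabs x)) with (K * 128) by (field; lra).
  replace (K * ((1 + Rabs x) * sech x) * (1 + Rabs x)) with (K * ((1 + Rabs x) * (1 + Rabs x) * sech x)) by ring.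
  apply Rmult_le_compat_l; auto.
  assert ((1 + Rabs x) * (1 + Rabs x) <= (1 + Rabs x) ^ 3) by (simpl; nra).
  apply Rle_trans with ((1 + Rabs x) ^ 3 * sech x); auto. apply Rmult_le_compat_r; lra.
Qed.

Lemma lim0_gen H K (F : (R -> Prop) -> Prop) : Filter F ->
  (forall M, F (fun x => M < Rabs x)) ->
  (forall x, Rabs (H x) <= K * ((1 + Rabs x) * sech x)) ->
  filterlim H F (locally 0).
Proof.
  intros FF HF Hb.
  assert (HK : 0 <= K).
  { pose proof (Hb 0). pose proof (Rabs_pos (H 0)). pose proof (sech_pos 0).
    pose proof (Rabs_pos 0). 
    assert (0 < (1 + Rabs 0) * sech 0) by (apply Rmult_lt_0_compat; lra). nra. }
  apply filterlim_locally. intros eps.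
  pose proof (cond_pos eps).
  apply (filter_imp (fun x => K * 128 / eps < Rabs x)); [|apply HF].
  intros x Hx. change (Rabs (H x - 0) < eps). rewrite Rminus_0_r.
  pose proof (Hb x). pose proof (Rabs_pos x).
  assert (0 <= K * ((1 + Rabs x) * sech x)) by (pose proof (Rabs_pos (H x)); lra).
  assert (SB := small_bound K x HK). rewrite Rabs_right in SB by lra.
  assert (K * 128 / (1 + Rabs x) < eps).
  { apply (Rmult_lt_reg_r (1 + Rabs x)). lra.
    replace (K * 128 / (1 + Rabs x) * (1 + Rabs x)) with (K * 128) by (field; lra).
    assert (K * 128 / eps * eps = K * 128) by (field; lra).
    assert (K * 128 / eps * eps < Rabs x * eps) by (apply Rmult_lt_compat_r; lra).
    nra. }
  lra.
Qed.

Lemma lim0_p H K : (forall x, Rabs (H x) <= K * ((1 + Rabs x) * sech x)) ->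
  filterlim H (Rbar_locally p_infty) (locally 0).
Proof.
  intros. apply (lim0_gen H K); auto. apply filter_filter.
  intros M. exists (Rabs M). intros x Hx. pose proof (Rle_abs M). pose proof (Rabs_pos M). pose proof (Rabs_maj2 M). rewrite Rabs_right; lra.
Qed.

Lemma lim0_m H K : (forall x, Rabs (H x) <= K * ((1 + Rabs x) * sech x)) ->
  filterlim H (Rbar_locally m_infty) (locally 0).
Proof.
  intros. apply (lim0_gen H K); auto. apply filter_filter.
  intros M. exists (- Rabs M). intros x Hx. pose proof (Rle_abs M). pose proof (Rabs_pos M). pose proof (Rabs_maj2 M). rewrite Rabs_left; lra.
Qed.

Lemma zero_int H h : (forall x, is_derive H x (h x)) -> (forall x : R, @continuous R_UniformSpace R_UniformSpace h x) ->
  filterlim H (Rbar_locally m_infty) (locally 0) ->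
  filterlim H (Rbar_locally p_infty) (locally 0) ->
  is_RInt_gen h (Rbar_locally m_infty) (Rbar_locally p_infty) 0.
Proof.
  intros Hd hc Hm Hp.
  assert (DE : forall x, Derive H x = h x) by (intros; apply is_derive_unique; auto).
  apply (is_RInt_gen_ext (Derive H)).
  - apply filter_forall. intros. apply DE.
  - assert (E := is_RInt_gen_Derive (Fa := Rbar_locally m_infty) (Fb := Rbar_locally p_infty) H 0 0).
    rewrite Rminus_0_r in E. apply E; auto.
    + apply filter_forall. intros. eexists. apply Hd.
    + apply filter_forall. intros. apply (continuous_ext h). intros; symmetry; apply DE. apply hc.
Qed.

Lemma lc_plus f g lf lg : is_RInt_gen f Mi Pi lf -> is_RInt_gen g Mi Pi lg ->
  is_RInt_gen (fun x => f x + g x) Mi Pi (lf + lg).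
Proof. intros. apply (is_RInt_gen_plus (V:=R_NormedModule)); auto. Qed.

Lemma lc_scal c f lf : is_RInt_gen f Mi Pi lf ->
  is_RInt_gen (fun x => c * f x) Mi Pi (c * lf).
Proof. intros. apply (is_RInt_gen_scal (V:=R_NormedModule)); auto. Qed.

Lemma Integral_is f l : is_RInt_gen f Mi Pi l -> Integral f = l.
Proof. intros. unfold Integral. apply (is_RInt_gen_unique (V:=R_CompleteNormedModule)). auto. Qed.

Lemma Integral_ex f : ex_RInt_gen f Mi Pi -> is_RInt_gen f Mi Pi (Integral f).
Proof. intros. unfold Integral. apply (RInt_gen_correct (V:=R_CompleteNormedModule)). auto. Qed.

Lemma s2_sq : sqrt 2 * sqrt 2 = 2.
Proof. apply sqrt_sqrt. lra. Qed.
Lemma s2_pos : 0 < sqrt 2.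
Proof. apply Rlt_sqrt2_0. Qed.
Lemma s2_le : sqrt 2 <= 3/2.
Proof. pose proof s2_sq. pose proof s2_pos. nra. Qed.

Definition w1 (y : R) : R := exp (sqrt 2 * y) * sech y ^ 2.
Definition w2 (y : R) : R := exp (- sqrt 2 * y) * sech y ^ 2.

Lemma cosh_even y : cosh (- y) = cosh y.
Proof. unfold cosh. rewrite Ropp_involutive, Rplus_comm. reflexivity. Qed.
Lemma sech_even y : sech (- y) = sech y.
Proof. unfold sech. rewrite cosh_even. auto. Qed.

Lemma w2_w1 y : w2 y = w1 (- y).
Proof. unfold w1, w2. rewrite sech_even. f_equal. f_equal. ring. Qed.

Lemma w1_bound y : Rabs (w1 y) * (1 + y ^ 2) <= 128.
Proof.
  unfold w1. pose proof (sech_pos y). pose proof (sech_le1 y).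
  assert (0 < exp (sqrt 2 * y) * sech y ^ 2) by (apply Rmult_lt_0_compat; [apply exp_pos| simpl; nra]).
  rewrite Rabs_right by lra.
  assert (0 <= y ^ 2) by apply pow2_ge_0.
  destruct (Rle_dec y 0).
  - assert (exp (sqrt 2 * y) <= 1).
    { rewrite <- exp_0. apply exp_le. pose proof s2_pos. nra. }
    pose proof (key_bound2 y).
    assert (sech y ^ 2 <= (1 + Rabs y) * sech y).
    { pose proof (Rabs_pos y). simpl. nra. }
    assert (0 < exp (sqrt 2 * y)) by apply exp_pos.
    assert (exp (sqrt 2 * y) * sech y ^ 2 <= (1 + Rabs y) * sech y).
    { apply Rle_trans with (1 * sech y ^ 2). apply Rmult_le_compat_r. simpl; nra. lra. lra. }
    apply Rle_trans with ((1 + Rabs y) * sech y * (1 + y ^ 2)).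
    apply Rmult_le_compat_r; lra.
    rewrite (Rmult_comm _ (1 + y ^ 2)). lra.
  -
    pose proof (cosh_ge_exp y). rewrite Rabs_right in H3 by lra.
    pose proof (cosh_pos' y).
    assert (E1 : exp (sqrt 2 * y) * sech y ^ 2 <= 4 * exp (- (y / 2))).
    { unfold sech.
      assert (exp y * exp y <= 4 * (cosh y * cosh y)) by (pose proof (exp_pos y); nra).
      assert (exp (sqrt 2 * y) <= exp (3/2 * y)) by (apply exp_le; pose proof s2_le; nra).
      assert (exp (3/2 * y) * exp (- (y/2)) = exp y) by (rewrite <- exp_plus; f_equal; field).
      assert (exp (sqrt 2 * y) * exp (- (y/2)) <= exp y) by (pose proof (exp_pos (-(y/2))); nra).
      replace (exp (sqrt 2 * y) * (/ cosh y) ^ 2) with (exp (sqrt 2 * y) / (cosh y * cosh y)) by (field; lra).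
      apply (Rmult_le_reg_r (cosh y * cosh y)). nra.
      replace (exp (sqrt 2 * y) / (cosh y * cosh y) * (cosh y * cosh y)) with (exp (sqrt 2 * y)) by (field; lra).
      assert (exp (3/2 * y) = exp (- (y/2)) * (exp y * exp y)) by (rewrite <- !exp_plus; f_equal; field).
      pose proof (exp_pos (- (y/2))).
      assert (exp (- (y/2)) * (exp y * exp y) <= exp (- (y/2)) * (4 * (cosh y * cosh y))) by (apply Rmult_le_compat_l; lra).
      lra. }
    assert (E2 : (1 + y ^ 2) * exp (- (y / 2)) <= 16).
    { assert (1 + y/4 <= exp (y/4)) by apply exp_ineq1_le.
      assert (exp (y/2) = exp (y/4) * exp (y/4)) by (rewrite <- exp_plus; f_equal; field).
      assert ((1 + y/4) * (1 + y/4) <= exp (y/2)) by (rewrite H6; apply Rmult_le_compat; lra).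
      assert (exp (- (y/2)) * exp (y/2) = 1) by (rewrite <- exp_plus; replace (- (y/2) + y/2) with 0 by ring; apply exp_0).
      pose proof (exp_pos (- (y/2))).
      assert (1 + y^2 <= 16 * ((1 + y/4) * (1 + y/4))) by (simpl; nra).
      nra. }
    nra.
Qed.

Lemma w2_bound y : Rabs (w2 y) * (1 + y ^ 2) <= 128.
Proof. rewrite w2_w1. replace (y ^ 2) with ((- y) ^ 2) by ring. apply w1_bound. Qed.

Lemma ex_derive_w1 x : ex_derive w1 x.
Proof. unfold w1. auto_derive. repeat split; apply ex_derive_sech. Qed.
Lemma ex_derive_w2 x : ex_derive w2 x.
Proof. unfold w2. auto_derive. repeat split; apply ex_derive_sech. Qed.
Lemma cont_w1 x : continuous w1 x.
Proof. apply (@ex_derive_continuous R_AbsRing R_NormedModule), ex_derive_w1. Qed.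
Lemma cont_w2 x : continuous w2 x.
Proof. apply (@ex_derive_continuous R_AbsRing R_NormedModule), ex_derive_w2. Qed.

Definition P1 := RInt w1 0.
Definition P2 := RInt w2 0.
Definition a1 : R := real (Lim P1 m_infty).
Definition b2 : R := real (Lim P2 p_infty).

Lemma a1_lim : filterlim P1 (Rbar_locally m_infty) (locally a1).
Proof.
  destruct (lim_m w1 128 cont_w1 w1_bound) as [l Hl].
  assert (Lim P1 m_infty = Finite l) by (apply is_lim_unique; exact Hl).
  unfold a1. rewrite H. exact Hl.
Qed.

Lemma b2_lim : filterlim P2 (Rbar_locally p_infty) (locally b2).
Proof.
  destruct (lim_p w2 128 cont_w2 w2_bound) as [l Hl].
  assert (Lim P2 p_infty = Finite l) by (apply is_lim_unique; exact Hl).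
  unfold b2. rewrite H. exact Hl.
Qed.

Lemma is_derive_P1 x : is_derive P1 x (w1 x).
Proof. apply (is_derive_prim w1 cont_w1). Qed.
Lemma is_derive_P2 x : is_derive P2 x (w2 x).
Proof. apply (is_derive_prim w2 cont_w2). Qed.
Lemma Derive_P1 x : Derive (fun y => P1 y) x = w1 x.
Proof. exact (is_derive_unique _ _ _ (is_derive_P1 x)). Qed.
Lemma Derive_P2 x : Derive (fun y => P2 y) x = w2 x.
Proof. exact (is_derive_unique _ _ _ (is_derive_P2 x)). Qed.

Lemma Derive_P1' x : Derive P1 x = w1 x.
Proof. exact (is_derive_unique _ _ _ (is_derive_P1 x)). Qed.
Lemma Derive_P2' x : Derive P2 x = w2 x.
Proof. exact (is_derive_unique _ _ _ (is_derive_P2 x)). Qed.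

Definition U (x : R) : R := exp (- sqrt 2 * x) * (P1 x - a1).
Definition V (x : R) : R := exp (sqrt 2 * x) * (b2 - P2 x).

Lemma at_point_lim (f : R -> R) x : filterlim f (at_point x) (locally (f x)).
Proof. intros P HP. exact (locally_singleton _ _ HP). Qed.

Lemma T_eq x : T x = U x + V x.
Proof.
  unfold T, Integral.
  apply (is_RInt_gen_unique (V:=R_CompleteNormedModule)).
  assert (E1 := is_RInt_gen_Derive (Fa := Rbar_locally m_infty) (Fb := at_point x) P1 a1 (P1 x)
                 (filter_forall _ (fun _ _ _ => ex_intro _ _ (is_derive_P1 _)))
                 (filter_forall _ (fun _ _ _ => continuous_ext _ _ _ (fun y => eq_sym (Derive_P1 y)) (cont_w1 _)))
                 a1_lim (at_point_lim P1 x)).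
  assert (E2 := is_RInt_gen_Derive (Fa := at_point x) (Fb := Rbar_locally p_infty) P2 (P2 x) b2
                 (filter_forall _ (fun _ _ _ => ex_intro _ _ (is_derive_P2 _)))
                 (filter_forall _ (fun _ _ _ => continuous_ext _ _ _ (fun y => eq_sym (Derive_P2 y)) (cont_w2 _)))
                 (at_point_lim P2 x) b2_lim).
  apply (is_RInt_gen_scal (V:=R_NormedModule) _ (exp (- sqrt 2 * x))) in E1.
  apply (is_RInt_gen_scal (V:=R_NormedModule) _ (exp (sqrt 2 * x))) in E2.
  set (k := fun y => exp (- sqrt 2 * Rabs (x - y)) * sech y ^ 2).
  assert (F1 : is_RInt_gen k (Rbar_locally m_infty) (at_point x) (U x)).
  { revert E1. apply is_RInt_gen_ext.
    apply (Filter_prod _ _ _ (fun a => a < x) (fun b => b = x)).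
    - exists x. auto.
    - reflexivity.
    - intros a b Ha Hb. subst b. simpl. rewrite Rmin_left, Rmax_right by lra.
      intros y Hy. rewrite Derive_P1'. unfold k, w1. rewrite Rabs_right by lra.
      change (scal (exp (- sqrt 2 * x)) (exp (sqrt 2 * y) * sech y ^ 2)) with
        (exp (- sqrt 2 * x) * (exp (sqrt 2 * y) * sech y ^ 2)).
      rewrite <- Rmult_assoc, <- exp_plus. f_equal. f_equal. ring. }
  assert (F2 : is_RInt_gen k (at_point x) (Rbar_locally p_infty) (V x)).
  { revert E2. apply is_RInt_gen_ext.
    apply (Filter_prod _ _ _ (fun a => a = x) (fun b => x < b)).
    - reflexivity.
    - exists x. auto.
    - intros a b Ha Hb. subst a. simpl. rewrite Rmin_left, Rmax_right by lra.
      intros y Hy. rewrite Derive_P2'. unfold k, w2. rewrite Rabs_left by lra.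
      change (scal (exp (sqrt 2 * x)) (exp (- sqrt 2 * y) * sech y ^ 2)) with
        (exp (sqrt 2 * x) * (exp (- sqrt 2 * y) * sech y ^ 2)).
      rewrite <- Rmult_assoc, <- exp_plus. f_equal. f_equal. ring. }
  exact (is_RInt_gen_Chasles (V:=R_NormedModule) _ x _ _ F1 F2).
Qed.

Lemma exp_pair x : exp (- sqrt 2 * x) * exp (sqrt 2 * x) = 1.
Proof. rewrite <- exp_plus. replace (- sqrt 2 * x + sqrt 2 * x) with 0 by ring. apply exp_0. Qed.

Lemma is_derive_U x : is_derive U x (- sqrt 2 * U x + sech x ^ 2).
Proof.
  unfold U. auto_derive.
  - eexists. apply is_derive_P1.
  - rewrite Derive_P1. unfold w1.
    pose proof (exp_pair x).
    replace (exp (- sqrt 2 * x) * (1 * (exp (sqrt 2 * x) * sech x ^ 2))) with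
      (exp (- sqrt 2 * x) * exp (sqrt 2 * x) * sech x ^ 2) by ring.
    rewrite H. ring.
Qed.

Lemma is_derive_V x : is_derive V x (sqrt 2 * V x - sech x ^ 2).
Proof.
  unfold V. auto_derive.
  - eexists. apply is_derive_P2.
  - rewrite Derive_P2. unfold w2.
    pose proof (exp_pair x).
    replace (exp (sqrt 2 * x) * - (1 * (exp (- sqrt 2 * x) * sech x ^ 2))) with
      (- (exp (- sqrt 2 * x) * exp (sqrt 2 * x) * sech x ^ 2)) by ring.
    rewrite H. ring.
Qed.

Lemma T_fun : T = fun x => U x + V x.
Proof. apply functional_extensionality. apply T_eq. Qed.

Lemma is_derive_T x : is_derive T x (sqrt 2 * (V x - U x)).
Proof.
  rewrite T_fun.
  evar (d : R). replace (sqrt 2 * (V x - U x)) with d.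
  apply (is_derive_plus (K:=R_AbsRing) (V:=R_NormedModule)). apply is_derive_U. apply is_derive_V.
  unfold d. simpl. unfold plus; simpl. ring.
Qed.

Lemma dT_eq x : dT x = sqrt 2 * (V x - U x).
Proof. unfold dT. apply is_derive_unique, is_derive_T. Qed.

Lemma dT_fun : dT = fun x => sqrt 2 * (V x - U x).
Proof. apply functional_extensionality. apply dT_eq. Qed.

Lemma ex_derive_T x : ex_derive (fun y => T y) x.
Proof. eexists. apply is_derive_T. Qed.
Lemma Derive_T x : Derive (fun y => T y) x = dT x.
Proof. reflexivity. Qed.
Lemma ex_derive_dT x : ex_derive (fun y => dT y) x.
Proof.
  rewrite dT_fun. auto_derive. split. eexists; apply is_derive_V. split; auto. eexists; apply is_derive_U.
Qed.


Lemma is_RInt_sech2 a b : is_RInt (fun y => sech y ^ 2) a b (tanh b - tanh a).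
Proof.
  apply (is_RInt_derive (fun y => tanh y)).
  - intros; apply is_derive_tanh.
  - intros. apply (@ex_derive_continuous R_AbsRing R_NormedModule). auto_derive. apply ex_derive_sech.
Qed.

Lemma exR_w1 a b : ex_RInt w1 a b.
Proof. apply (ex_RInt_continuous (V:=R_CompleteNormedModule)). intros; apply cont_w1. Qed.
Lemma exR_w2 a b : ex_RInt w2 a b.
Proof. apply (ex_RInt_continuous (V:=R_CompleteNormedModule)). intros; apply cont_w2. Qed.

Lemma w1_pos y : 0 < w1 y.
Proof. unfold w1. pose proof (sech_pos y). apply Rmult_lt_0_compat. apply exp_pos. simpl; nra. Qed.
Lemma w2_pos y : 0 < w2 y.
Proof. unfold w2. pose proof (sech_pos y). apply Rmult_lt_0_compat. apply exp_pos. simpl; nra. Qed.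

Lemma seg_bound1 a x : a < x -> 0 <= RInt w1 a x /\ exp (- sqrt 2 * x) * RInt w1 a x <= 2.
Proof.
  intros Hax. split.
  - apply RInt_ge_0. lra. apply exR_w1. intros; left; apply w1_pos.
  - assert (E : exp (- sqrt 2 * x) * RInt w1 a x = RInt (fun y => exp (- sqrt 2 * x) * w1 y) a x).
    { symmetry. apply (RInt_scal (V:=R_CompleteNormedModule)). apply exR_w1. }
    rewrite E.
    apply Rle_trans with (RInt (fun y => sech y ^ 2) a x).
    + apply RInt_le. lra.
      * apply (ex_RInt_continuous (V:=R_CompleteNormedModule)). intros.
        apply (@ex_derive_continuous R_AbsRing R_NormedModule). unfold w1. auto_derive. apply ex_derive_sech.
      * eexists. apply is_RInt_sech2.
      * intros y Hy. unfold w1. rewrite <- Rmult_assoc, <- exp_plus.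
        assert (exp (- sqrt 2 * x + sqrt 2 * y) <= 1).
        { rewrite <- exp_0. apply exp_le. pose proof s2_pos. nra. }
        pose proof (sech_pos y). assert (0 <= sech y ^ 2) by (simpl; nra). nra.
    + rewrite (is_RInt_unique _ _ _ _ (is_RInt_sech2 a x)).
      pose proof (tanh_bound x). pose proof (tanh_bound a).
      apply Rabs_le_between in H. apply Rabs_le_between in H0. lra.
Qed.

Lemma seg_bound2 x b : x < b -> 0 <= RInt w2 x b /\ exp (sqrt 2 * x) * RInt w2 x b <= 2.
Proof.
  intros Hxb. split.
  - apply RInt_ge_0. lra. apply exR_w2. intros; left; apply w2_pos.
  - assert (E : exp (sqrt 2 * x) * RInt w2 x b = RInt (fun y => exp (sqrt 2 * x) * w2 y) x b).
    { symmetry. apply (RInt_scal (V:=R_CompleteNormedModule)). apply exR_w2. }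
    rewrite E.
    apply Rle_trans with (RInt (fun y => sech y ^ 2) x b).
    + apply RInt_le. lra.
      * apply (ex_RInt_continuous (V:=R_CompleteNormedModule)). intros.
        apply (@ex_derive_continuous R_AbsRing R_NormedModule). unfold w2. auto_derive. apply ex_derive_sech.
      * eexists. apply is_RInt_sech2.
      * intros y Hy. unfold w2. rewrite <- Rmult_assoc, <- exp_plus.
        assert (exp (sqrt 2 * x + - sqrt 2 * y) <= 1).
        { rewrite <- exp_0. apply exp_le. pose proof s2_pos. nra. }
        pose proof (sech_pos y). assert (0 <= sech y ^ 2) by (simpl; nra). nra.
    + rewrite (is_RInt_unique _ _ _ _ (is_RInt_sech2 x b)).
      pose proof (tanh_bound x). pose proof (tanh_bound b).
      apply Rabs_le_between in H. apply Rabs_le_between in H0. lra.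
Qed.

Lemma U_bounds x : 0 <= U x <= 2.
Proof.
  assert (Hseg : forall a, a < x -> P1 x - 2 * exp (sqrt 2 * x) <= P1 a <= P1 x).
  { intros a Ha. destruct (seg_bound1 a x Ha) as [B1 B2].
    assert (C : P1 a + RInt w1 a x = P1 x) by (unfold P1; apply (RInt_Chasles (V:=R_CompleteNormedModule)); apply exR_w1).
    pose proof (exp_pair x). pose proof (exp_pos (sqrt 2 * x)). pose proof (exp_pos (- sqrt 2 * x)).
    assert (RInt w1 a x <= 2 * exp (sqrt 2 * x)).
    { apply (Rmult_le_reg_l (exp (- sqrt 2 * x))); auto. nra. }
    change (P1 a + RInt w1 a x = P1 x) in C. lra. }
  assert (L1 : Rbar_le (P1 x - 2 * exp (sqrt 2 * x)) a1).
  { apply (filterlim_le (F := Rbar_locally m_infty) (fun _ => P1 x - 2 * exp (sqrt 2 * x)) P1).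
    - exists x. intros a Ha. apply Hseg; auto.
    - apply filterlim_const.
    - apply a1_lim. }
  assert (L2 : Rbar_le a1 (P1 x)).
  { apply (filterlim_le (F := Rbar_locally m_infty) P1 (fun _ => P1 x)).
    - exists x. intros a Ha. apply Hseg; auto.
    - apply a1_lim.
    - apply filterlim_const. }
  simpl in L1, L2.
  unfold U. pose proof (exp_pair x). pose proof (exp_pos (- sqrt 2 * x)).
  split. apply Rmult_le_pos; lra.
  nra.
Qed.

Lemma V_bounds x : 0 <= V x <= 2.
Proof.
  assert (Hseg : forall b, x < b -> P2 x <= P2 b <= P2 x + 2 * exp (- sqrt 2 * x)).
  { intros b Hb. destruct (seg_bound2 x b Hb) as [B1 B2].
    assert (C : P2 x + RInt w2 x b = P2 b) by (unfold P2; apply (RInt_Chasles (V:=R_CompleteNormedModule)); apply exR_w2).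
    pose proof (exp_pair x). pose proof (exp_pos (sqrt 2 * x)). pose proof (exp_pos (- sqrt 2 * x)).
    assert (RInt w2 x b <= 2 * exp (- sqrt 2 * x)).
    { apply (Rmult_le_reg_l (exp (sqrt 2 * x))); auto. nra. }
    change (P2 x + RInt w2 x b = P2 b) in C. lra. }
  assert (L1 : Rbar_le (P2 x) b2).
  { apply (filterlim_le (F := Rbar_locally p_infty) (fun _ => P2 x) P2).
    - exists x. intros b Hb. apply Hseg; auto.
    - apply filterlim_const.
    - apply b2_lim. }
  assert (L2 : Rbar_le b2 (P2 x + 2 * exp (- sqrt 2 * x))).
  { apply (filterlim_le (F := Rbar_locally p_infty) P2 (fun _ => P2 x + 2 * exp (- sqrt 2 * x))).
    - exists x. intros b Hb. apply Hseg; auto.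
    - apply b2_lim.
    - apply filterlim_const. }
  simpl in L1, L2.
  unfold V. pose proof (exp_pair x). pose proof (exp_pos (sqrt 2 * x)).
  split. apply Rmult_le_pos; lra.
  nra.
Qed.

Lemma T_bound x : Rabs (T x) <= 4.
Proof. rewrite T_eq. pose proof (U_bounds x). pose proof (V_bounds x). apply Rabs_le. lra. Qed.


Lemma ln2_bounds : 0 < ln 2 < 1.
Proof.
  split.
  - rewrite <- ln_1. apply ln_increasing; lra.
  - rewrite <- (ln_exp 1). apply ln_increasing. lra.
    pose proof (exp_ineq1 1 ltac:(lra)). lra.
Qed.

Definition Bd (f b : R) := Rabs f <= b.

Lemma Bd_plus A B a b : Bd A a -> Bd B b -> Bd (A + B) (a + b).
Proof. unfold Bd; intros. eapply Rle_trans. apply Rabs_triang. lra. Qed.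
Lemma Bd_minus A B a b : Bd A a -> Bd B b -> Bd (A - B) (a + b).
Proof. unfold Bd; intros. eapply Rle_trans. apply Rabs_triang. rewrite Rabs_Ropp. lra. Qed.
Lemma Bd_opp A a : Bd A a -> Bd (- A) a.
Proof. unfold Bd; intros. rewrite Rabs_Ropp. auto. Qed.
Lemma Bd_mult A B a b : Bd A a -> Bd B b -> Bd (A * B) (a * b).
Proof. unfold Bd; intros. rewrite Rabs_mult. apply Rmult_le_compat; auto; apply Rabs_pos. Qed.
Lemma Bd_pow A a n : Bd A a -> Bd (A ^ n) (a ^ n).
Proof. unfold Bd; intros. rewrite <- RPow_abs. apply pow_incr. split; auto. apply Rabs_pos. Qed.
Lemma Bd_abs A : Bd A (Rabs A).
Proof. unfold Bd; lra. Qed.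
Lemma Bd_sech x : Bd (sech x) 1.
Proof. unfold Bd. pose proof (sech_pos x). pose proof (sech_le1 x). rewrite Rabs_right; lra. Qed.
Lemma Bd_tanh x : Bd (tanh x) 1.
Proof. apply tanh_bound. Qed.
Lemma Bd_cos x : Bd (cos x) 1.
Proof. unfold Bd. apply Rabs_le. pose proof (COS_bound x). lra. Qed.
Lemma Bd_sin x : Bd (sin x) 1.
Proof. unfold Bd. apply Rabs_le. pose proof (SIN_bound x). lra. Qed.
Lemma Bd_T x : Bd (T x) 4.
Proof. apply T_bound. Qed.
Lemma Bd_L x : Bd (ln (sech x)) (Rabs x).
Proof. apply ln_sech_bound. Qed.
Lemma Bd_s2 : Bd (sqrt 2) 2.
Proof. unfold Bd. pose proof s2_pos. pose proof s2_le. rewrite Rabs_right; lra. Qed.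
Lemma Bd_l2 : Bd (ln 2) 1.
Proof. unfold Bd. pose proof ln2_bounds. rewrite Rabs_right; lra. Qed.

Ltac bd x :=
  match goal with
  | |- Bd x _ => apply Bd_abs
  | |- Bd (sech x) _ => apply Bd_sech
  | |- Bd (tanh x) _ => apply Bd_tanh
  | |- Bd (cos x) _ => apply Bd_cos
  | |- Bd (sin x) _ => apply Bd_sin
  | |- Bd (T x) _ => apply Bd_T
  | |- Bd (ln (sech x)) _ => apply Bd_L
  | |- Bd (sqrt 2) _ => apply Bd_s2
  | |- Bd (ln 2) _ => apply Bd_l2
  | |- Bd (_ + _) _ => eapply Bd_plus; [bd x | bd x]
  | |- Bd (_ - _) _ => eapply Bd_minus; [bd x | bd x]
  | |- Bd (- _) _ => eapply Bd_opp; bd x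
  | |- Bd (_ * _) _ => eapply Bd_mult; [bd x | bd x]
  | |- Bd (_ ^ _) _ => eapply Bd_pow; bd x
  | |- Bd _ _ => apply Bd_abs
  end.

Ltac clean_abs :=
  repeat match goal with
  | |- context [Rabs ?c] => first [rewrite (Rabs_pos_eq c) by lra | rewrite (Rabs_left1 c) by lra]
  end.

Lemma bd_gen (Q : R -> R) K x b : Bd (Q x) b -> b <= K * (1 + Rabs x) ->
  Rabs (sech x * Q x) <= K * ((1 + Rabs x) * sech x).
Proof.
  unfold Bd; intros. rewrite Rabs_mult. pose proof (sech_pos x).
  rewrite (Rabs_right (sech x)) by lra.
  replace (K * ((1 + Rabs x) * sech x)) with (sech x * (K * (1 + Rabs x))) by ring.
  apply Rmult_le_compat_l; lra.
Qed.


Lemma sech_pow_le k x : (1 <= k)%nat -> 0 <= sech x ^ k <= sech x.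
Proof.
  intros Hk. pose proof (sech_pos x). pose proof (sech_le1 x).
  induction k. lia.
  destruct k. simpl; lra.
  assert (IH := IHk ltac:(lia)). simpl in *. split; nra.
Qed.

Ltac solve_ex1 := first [apply ex_derive_sech | apply ex_derive_tanh | apply ex_derive_T
  | apply ex_derive_dT | apply sech_pos | exact I].
Ltac solve_ex := repeat match goal with
  | |- _ /\ _ => split
  | |- _ => solve_ex1
  end.

Ltac cont_tac := intros; apply (@ex_derive_continuous R_AbsRing R_NormedModule); auto_derive; solve_ex.

Lemma abs_le_1 z : (z = cos 0 \/ True) -> True. Proof. auto. Qed.


Lemma Bd_sechk k x : (1 <= k)%nat -> Bd (sech x ^ k) (sech x).
Proof. intros Hk. unfold Bd. pose proof (sech_pow_le k x Hk). rewrite Rabs_right; lra. Qed.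

Lemma Bd_le A b c : Bd A b -> b <= c -> Rabs A <= c.
Proof. unfold Bd; lra. Qed.

Ltac bdk x k Hk :=
  match goal with
  | |- Bd (sech x ^ k) _ => apply (Bd_sechk k x Hk)
  | |- Bd (_ * _) _ => eapply Bd_mult; [bdk x k Hk | bdk x k Hk]
  | |- _ => bd x
  end.

Ltac basis_tac K k :=
  let Hk := fresh "Hk" in
  intros Hk; apply Integral_ex; apply (int_sech _ K);
  [ cont_tac
  | let x := fresh "x" in intros x; eapply Bd_le; [cbv beta; bdk x k Hk |];
    pose proof (Rabs_pos x); pose proof (sech_pos x);
    assert (0 <= Rabs x * sech x) by (apply Rmult_le_pos; lra); nra ].

Lemma is_p k : (1 <= k)%nat -> is_RInt_gen (fun y => sech y ^ k * cos y) Mi Pi (p k).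
Proof. basis_tac 1 k. Qed.
Lemma is_q k : (1 <= k)%nat -> is_RInt_gen (fun y => sech y ^ k * ln (sech y) * cos y) Mi Pi (q k).
Proof. basis_tac 1 k. Qed.
Lemma is_r k : (1 <= k)%nat -> is_RInt_gen (fun y => sech y ^ k * T y * cos y) Mi Pi (r k).
Proof. basis_tac 4 k. Qed.
Lemma is_s k : (1 <= k)%nat -> is_RInt_gen (fun y => sech y ^ k * T y * tanh y * sin y) Mi Pi (s k).
Proof. basis_tac 4 k. Qed.
Lemma is_a k : (1 <= k)%nat -> is_RInt_gen (fun y => y * sech y ^ k * tanh y * cos y) Mi Pi (a k).
Proof. basis_tac 1 k. Qed.

Lemma c_plus (f g : R -> R) (x : R) : continuous f x -> continuous g x -> continuous (fun y => f y + g y) x.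
Proof. intros. apply (continuous_plus f g); auto. Qed.
Lemma c_minus (f g : R -> R) (x : R) : continuous f x -> continuous g x -> continuous (fun y => f y - g y) x.
Proof. intros. apply (continuous_minus f g); auto. Qed.
Lemma c_mult (f g : R -> R) (x : R) : continuous f x -> continuous g x -> continuous (fun y => f y * g y) x.
Proof. intros. apply (continuous_mult f g); auto. Qed.
Lemma c_opp (f : R -> R) (x : R) : continuous f x -> continuous (fun y => - f y) x.
Proof. intros. apply (continuous_opp f); auto. Qed.
Lemma c_pow (f : R -> R) n (x : R) : continuous f x -> continuous (fun y => f y ^ n) x.
Proof.
  intros. induction n. simpl. apply continuous_const.
  simpl. apply (c_mult f (fun y => f y ^ n)); auto.
Qed.
Lemma c_const (c : R) (x : R) : continuous (fun _ => c) x.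
Proof. apply continuous_const. Qed.
Lemma c_id (x : R) : continuous (fun y : R => y) x.
Proof. apply continuous_id. Qed.
Lemma c_ex (f : R -> R) (x : R) : ex_derive f x -> continuous f x.
Proof. apply (@ex_derive_continuous R_AbsRing R_NormedModule). Qed.
Lemma c_sech (x : R) : continuous (fun y => sech y) x.
Proof. apply c_ex, ex_derive_sech. Qed.
Lemma c_tanh (x : R) : continuous (fun y => tanh y) x.
Proof. apply c_ex, ex_derive_tanh. Qed.
Lemma c_T (x : R) : continuous (fun y => T y) x.
Proof. apply c_ex, ex_derive_T. Qed.
Lemma c_dT (x : R) : continuous (fun y => dT y) x.
Proof. apply c_ex, ex_derive_dT. Qed.
Lemma c_cos (x : R) : continuous (fun y => cos y) x.
Proof. apply c_ex. auto_derive. auto. Qed.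
Lemma c_sin (x : R) : continuous (fun y => sin y) x.
Proof. apply c_ex. auto_derive. auto. Qed.
Lemma c_L (x : R) : continuous (fun y => ln (sech y)) x.
Proof. apply c_ex. auto_derive. solve_ex. Qed.

Ltac cont :=
  match goal with
  | |- continuous (fun y => _ + _) _ => apply c_plus; cont
  | |- continuous (fun y => _ - _) _ => apply c_minus; cont
  | |- continuous (fun y => _ * _) _ => apply c_mult; cont
  | |- continuous (fun y => - _) _ => apply c_opp; cont
  | |- continuous (fun y => _ ^ _) _ => apply c_pow; cont
  | |- continuous (Rmult _) _ => apply c_mult; cont
  | |- continuous (Rplus _) _ => apply c_plus; cont
  | |- continuous (Rminus _) _ => apply c_minus; cont
  | |- continuous (fun y => y) _ => apply c_id
  | |- continuous sech _ => apply c_sech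
  | |- continuous tanh _ => apply c_tanh
  | |- continuous T _ => apply c_T
  | |- continuous dT _ => apply c_dT
  | |- continuous cos _ => apply c_cos
  | |- continuous sin _ => apply c_sin
  | |- continuous (fun y => sech y) _ => apply c_sech
  | |- continuous (fun y => tanh y) _ => apply c_tanh
  | |- continuous (fun y => T y) _ => apply c_T
  | |- continuous (fun y => dT y) _ => apply c_dT
  | |- continuous (fun y => cos y) _ => apply c_cos
  | |- continuous (fun y => sin y) _ => apply c_sin
  | |- continuous (fun y => ln (sech y)) _ => apply c_L
  | |- continuous (fun y => _) _ => apply c_const
  end.

Lemma d_plus (f g : R -> R) x df dg : is_derive f x df -> is_derive g x dg ->
  is_derive (fun y => f y + g y) x (df + dg).
Proof. intros. apply (is_derive_plus (K:=R_AbsRing) (V:=R_NormedModule) f g); auto. Qed.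
Lemma d_minus (f g : R -> R) x df dg : is_derive f x df -> is_derive g x dg ->
  is_derive (fun y => f y - g y) x (df - dg).
Proof. intros. apply (is_derive_minus (K:=R_AbsRing) (V:=R_NormedModule) f g); auto. Qed.
Lemma d_mult (f g : R -> R) x df dg : is_derive f x df -> is_derive g x dg ->
  is_derive (fun y => f y * g y) x (df * g x + f x * dg).
Proof. intros. apply (is_derive_mult f g); auto. intros; apply Rmult_comm. Qed.
Lemma d_opp (f : R -> R) x df : is_derive f x df -> is_derive (fun y => - f y) x (- df).
Proof. intros. apply (is_derive_opp (K:=R_AbsRing) (V:=R_NormedModule) f); auto. Qed.
Lemma d_const (c : R) x : is_derive (fun _ => c) x 0.
Proof. apply (is_derive_const (K:=R_AbsRing) (V:=R_NormedModule)). Qed.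
Lemma d_id x : is_derive (fun y : R => y) x 1.
Proof. apply (is_derive_id (K:=R_AbsRing)). Qed.
Lemma d_cos x : is_derive cos x (- sin x).
Proof. auto_derive. auto. ring. Qed.
Lemma d_sin x : is_derive sin x (cos x).
Proof. auto_derive. auto. ring. Qed.
Lemma d_L x : is_derive (fun y => ln (sech y)) x (- tanh x).
Proof. auto_derive. solve_ex. rewrite Derive_sech. pose proof (sech_pos x). field. lra. Qed.
Lemma d_sech x : is_derive sech x (- (sech x * tanh x)).
Proof. apply is_derive_sech. Qed.
Lemma d_tanh x : is_derive tanh x (sech x ^ 2).
Proof. apply is_derive_tanh. Qed.
Lemma d_T x : is_derive T x (dT x).
Proof. rewrite dT_eq. apply is_derive_T. Qed.
Lemma d_eq (f : R -> R) x d d' : is_derive f x d -> d = d' -> is_derive f x d'.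
Proof. intros; subst; auto. Qed.

Ltac der :=
  match goal with
  | |- is_derive (fun y => _ + _) _ _ => eapply d_plus; [der | der]
  | |- is_derive (fun y => _ - _) _ _ => eapply d_minus; [der | der]
  | |- is_derive (fun y => _ * _) _ _ => eapply d_mult; [der | der]
  | |- is_derive (fun y => - _) _ _ => eapply d_opp; der
  | |- is_derive (Rmult _) _ _ => eapply d_mult; [der | der]
  | |- is_derive (Rplus _) _ _ => eapply d_plus; [der | der]
  | |- is_derive (Rminus _) _ _ => eapply d_minus; [der | der]
  | |- is_derive (fun y => y) _ _ => apply d_id
  | |- is_derive sech _ _ => apply d_sech
  | |- is_derive tanh _ _ => apply d_tanh
  | |- is_derive T _ _ => apply d_T
  | |- is_derive cos _ _ => apply d_cos
  | |- is_derive sin _ _ => apply d_sin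
  | |- is_derive (fun y => sech y) _ _ => apply d_sech
  | |- is_derive (fun y => tanh y) _ _ => apply d_tanh
  | |- is_derive (fun y => T y) _ _ => apply d_T
  | |- is_derive (fun y => cos y) _ _ => apply d_cos
  | |- is_derive (fun y => sin y) _ _ => apply d_sin
  | |- is_derive (fun y => ln (sech y)) _ _ => apply d_L
  | |- is_derive (fun y => _) _ _ => apply d_const
  end.


Lemma dphi3_eq x : dphi3 x = - (sqrt 2 * (sech x * tanh x)).
Proof.
  unfold dphi3. apply is_derive_unique. unfold phi3.
  auto_derive. apply ex_derive_sech. rewrite Derive_sech. ring.
Qed.

Lemma phi3_pos x : 0 < phi3 x.
Proof. unfold phi3. apply Rmult_lt_0_compat. apply s2_pos. apply sech_pos. Qed.

Lemma div_eq1 x : dphi3 x / (2 * sqrt 2 * phi3 x) = - (sqrt 2 / 4) * tanh x.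
Proof.
  rewrite dphi3_eq. unfold phi3. pose proof (sech_pos x). pose proof s2_pos.
  replace (sqrt 2 / 4) with (sqrt 2 * sqrt 2 / (4 * sqrt 2)) by (field; lra).
  rewrite s2_sq. field. lra.
Qed.

Lemma div_eq2 x : dphi3 x / phi3 x = - tanh x.
Proof.
  rewrite dphi3_eq. unfold phi3. pose proof (sech_pos x). pose proof s2_pos.
  field. lra.
Qed.

Lemma inv_eq1 : / (4 * sqrt 2) = sqrt 2 / 8.
Proof. pose proof s2_pos. replace (sqrt 2 / 8) with (sqrt 2 * sqrt 2 / (8 * sqrt 2)) by (field; lra).
  rewrite s2_sq. field. lra. Qed.

Lemma inv_eq2 : 3 / (4 * sqrt 2) = 3 * sqrt 2 / 8.
Proof. pose proof s2_pos. replace (3 * sqrt 2 / 8) with (3 * (sqrt 2 * sqrt 2) / (8 * sqrt 2)) by (field; lra).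
  rewrite s2_sq. field. lra. Qed.

Lemma ln_phi x : ln (phi3 x) = ln 2 / 2 + ln (sech x).
Proof.
  unfold phi3. rewrite ln_mult by (apply s2_pos || apply sech_pos).
  f_equal. 
  assert (ln (sqrt 2 * sqrt 2) = ln 2) by (rewrite s2_sq; auto).
  rewrite ln_mult in H by apply s2_pos. lra.
Qed.

Lemma cof (A B qs qt s2 t S : R) : s2 * s2 = 2 -> t * t = 1 - S * S ->
  A - B = qs * (s2 * s2 - 2) + qt * (t * t - (1 - S * S)) -> A = B.
Proof. intros H1 H2 H3. rewrite H1, H2 in H3. lra. Qed.

Lemma Integral_ext f g : (forall x, f x = g x) -> Integral f = Integral g.
Proof. intros. f_equal. apply functional_extensionality. auto. Qed.

Ltac prep x :=
  unfold Delta1, Delta2, Defs.R1, Defs.R2, Defs.F, Defs.E, h31, h32;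
  rewrite ?(div_eq1 x), ?(div_eq2 x), ?inv_eq2, ?inv_eq1, ?(ln_phi x), ?(dphi3_eq x);
  unfold phi3.

Definition H1 (y : R) : R :=
  ((5/8) * (sech y) * (sin y) * (sqrt 2)
   + (1/4) * (sech y) * (sin y) * (sqrt 2) * (ln 2)
   + (-4) * (sech y) * (sin y) * (T y)
   + (5/8) * (sech y) * (tanh y) * (cos y) * (sqrt 2)
   + (1/4) * (sech y) * (tanh y) * (cos y) * (sqrt 2) * (ln 2)
   + (1) * (sech y) * (tanh y) * (cos y) * (ln (sech y)) * (sqrt 2)
   + (10) * (sech y) * (sech y) * (sech y) * (sin y) * (T y)
   + (-15/2) * (sech y) * (sech y) * (sech y) * (tanh y) * (cos y) * (sqrt 2)
   + (-3) * (sech y) * (sech y) * (sech y) * (tanh y) * (cos y) * (sqrt 2) * (ln 2)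
   + (4) * (sech y) * (sech y) * (sech y) * (tanh y) * (cos y) * (T y)
   + (-6) * (sech y) * (sech y) * (sech y) * (tanh y) * (cos y) * (ln (sech y)) * (sqrt 2)
   + (-6) * (sech y) * (sech y) * (sech y) * (sech y) * (sech y) * (sin y) * (T y)
   + (11/2) * (sech y) * (sech y) * (sech y) * (sech y) * (sech y) * (tanh y) * (cos y) * (sqrt 2)
   + (3) * (sech y) * (sech y) * (sech y) * (sech y) * (sech y) * (tanh y) * (cos y) * (sqrt 2) * (ln 2)
   + (-6) * (sech y) * (sech y) * (sech y) * (sech y) * (sech y) * (tanh y) * (cos y) * (T y)
   + (6) * (sech y) * (sech y) * (sech y) * (sech y) * (sech y) * (tanh y) * (cos y) * (ln (sech y)) * (sqrt 2)
   + (-1) * y * (sech y) * (cos y) * (sqrt 2)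
   + (19) * y * (sech y) * (sech y) * (sech y) * (cos y) * (sqrt 2)
   + (-48) * y * (sech y) * (sech y) * (sech y) * (sech y) * (sech y) * (cos y) * (sqrt 2)
   + (30) * y * (sech y) * (sech y) * (sech y) * (sech y) * (sech y) * (sech y) * (sech y) * (cos y) * (sqrt 2)).

Definition Q1 (y : R) : R :=
  ((5/8) * (sin y) * (sqrt 2)
   + (1/4) * (sin y) * (sqrt 2) * (ln 2)
   + (-4) * (sin y) * (T y)
   + (5/8) * (tanh y) * (cos y) * (sqrt 2)
   + (1/4) * (tanh y) * (cos y) * (sqrt 2) * (ln 2)
   + (1) * (tanh y) * (cos y) * (ln (sech y)) * (sqrt 2)
   + (10) * (sech y) ^ 2 * (sin y) * (T y)
   + (-15/2) * (sech y) ^ 2 * (tanh y) * (cos y) * (sqrt 2)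
   + (-3) * (sech y) ^ 2 * (tanh y) * (cos y) * (sqrt 2) * (ln 2)
   + (4) * (sech y) ^ 2 * (tanh y) * (cos y) * (T y)
   + (-6) * (sech y) ^ 2 * (tanh y) * (cos y) * (ln (sech y)) * (sqrt 2)
   + (-6) * (sech y) ^ 4 * (sin y) * (T y)
   + (11/2) * (sech y) ^ 4 * (tanh y) * (cos y) * (sqrt 2)
   + (3) * (sech y) ^ 4 * (tanh y) * (cos y) * (sqrt 2) * (ln 2)
   + (-6) * (sech y) ^ 4 * (tanh y) * (cos y) * (T y)
   + (6) * (sech y) ^ 4 * (tanh y) * (cos y) * (ln (sech y)) * (sqrt 2)
   + (-1) * y * (cos y) * (sqrt 2)
   + (19) * y * (sech y) ^ 2 * (cos y) * (sqrt 2)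
   + (-48) * y * (sech y) ^ 4 * (cos y) * (sqrt 2)
   + (30) * y * (sech y) ^ 6 * (cos y) * (sqrt 2)).

Definition hd1 (y : R) : R :=
  ((-4) * (sech y) * (sin y) * (dT y)
   + (-3/8) * (sech y) * (cos y) * (sqrt 2)
   + (1/4) * (sech y) * (cos y) * (sqrt 2) * (ln 2)
   + (-4) * (sech y) * (cos y) * (T y)
   + (-5/4) * (sech y) * (tanh y) * (sin y) * (sqrt 2)
   + (-1/2) * (sech y) * (tanh y) * (sin y) * (sqrt 2) * (ln 2)
   + (4) * (sech y) * (tanh y) * (sin y) * (T y)
   + (-1) * (sech y) * (tanh y) * (sin y) * (ln (sech y)) * (sqrt 2)
   + (-13/8) * (sech y) * (tanh y) ^ 2 * (cos y) * (sqrt 2)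
   + (-1/4) * (sech y) * (tanh y) ^ 2 * (cos y) * (sqrt 2) * (ln 2)
   + (-1) * (sech y) * (tanh y) ^ 2 * (cos y) * (ln (sech y)) * (sqrt 2)
   + (10) * (sech y) ^ 3 * (sin y) * (dT y)
   + (157/8) * (sech y) ^ 3 * (cos y) * (sqrt 2)
   + (1/4) * (sech y) ^ 3 * (cos y) * (sqrt 2) * (ln 2)
   + (10) * (sech y) ^ 3 * (cos y) * (T y)
   + (1) * (sech y) ^ 3 * (cos y) * (ln (sech y)) * (sqrt 2)
   + (15/2) * (sech y) ^ 3 * (tanh y) * (sin y) * (sqrt 2)
   + (3) * (sech y) ^ 3 * (tanh y) * (sin y) * (sqrt 2) * (ln 2)
   + (-34) * (sech y) ^ 3 * (tanh y) * (sin y) * (T y)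
   + (6) * (sech y) ^ 3 * (tanh y) * (sin y) * (ln (sech y)) * (sqrt 2)
   + (4) * (sech y) ^ 3 * (tanh y) * (cos y) * (dT y)
   + (57/2) * (sech y) ^ 3 * (tanh y) ^ 2 * (cos y) * (sqrt 2)
   + (9) * (sech y) ^ 3 * (tanh y) ^ 2 * (cos y) * (sqrt 2) * (ln 2)
   + (-12) * (sech y) ^ 3 * (tanh y) ^ 2 * (cos y) * (T y)
   + (18) * (sech y) ^ 3 * (tanh y) ^ 2 * (cos y) * (ln (sech y)) * (sqrt 2)
   + (-6) * (sech y) ^ 5 * (sin y) * (dT y)
   + (-111/2) * (sech y) ^ 5 * (cos y) * (sqrt 2)
   + (-3) * (sech y) ^ 5 * (cos y) * (sqrt 2) * (ln 2)
   + (-2) * (sech y) ^ 5 * (cos y) * (T y)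
   + (-6) * (sech y) ^ 5 * (cos y) * (ln (sech y)) * (sqrt 2)
   + (-11/2) * (sech y) ^ 5 * (tanh y) * (sin y) * (sqrt 2)
   + (-3) * (sech y) ^ 5 * (tanh y) * (sin y) * (sqrt 2) * (ln 2)
   + (36) * (sech y) ^ 5 * (tanh y) * (sin y) * (T y)
   + (-6) * (sech y) ^ 5 * (tanh y) * (sin y) * (ln (sech y)) * (sqrt 2)
   + (-6) * (sech y) ^ 5 * (tanh y) * (cos y) * (dT y)
   + (-67/2) * (sech y) ^ 5 * (tanh y) ^ 2 * (cos y) * (sqrt 2)
   + (-15) * (sech y) ^ 5 * (tanh y) ^ 2 * (cos y) * (sqrt 2) * (ln 2)
   + (30) * (sech y) ^ 5 * (tanh y) ^ 2 * (cos y) * (T y)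
   + (-30) * (sech y) ^ 5 * (tanh y) ^ 2 * (cos y) * (ln (sech y)) * (sqrt 2)
   + (71/2) * (sech y) ^ 7 * (cos y) * (sqrt 2)
   + (3) * (sech y) ^ 7 * (cos y) * (sqrt 2) * (ln 2)
   + (-6) * (sech y) ^ 7 * (cos y) * (T y)
   + (6) * (sech y) ^ 7 * (cos y) * (ln (sech y)) * (sqrt 2)
   + (1) * y * (sech y) * (sin y) * (sqrt 2)
   + (1) * y * (sech y) * (tanh y) * (cos y) * (sqrt 2)
   + (-19) * y * (sech y) ^ 3 * (sin y) * (sqrt 2)
   + (-57) * y * (sech y) ^ 3 * (tanh y) * (cos y) * (sqrt 2)
   + (48) * y * (sech y) ^ 5 * (sin y) * (sqrt 2)
   + (240) * y * (sech y) ^ 5 * (tanh y) * (cos y) * (sqrt 2)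
   + (-30) * y * (sech y) ^ 7 * (sin y) * (sqrt 2)
   + (-210) * y * (sech y) ^ 7 * (tanh y) * (cos y) * (sqrt 2)).

Definition G1 (y : R) : R :=
  ((sqrt 2 * ((2) + (0) * ln 2)) * (sech y ^ 1 * cos y) + ((sqrt 2 * ((-97/2) + (-9) * ln 2)) * (sech y ^ 3 * cos y) + ((sqrt 2 * ((110) + (24) * ln 2)) * (sech y ^ 5 * cos y) + ((sqrt 2 * ((-127/2) + (-15) * ln 2)) * (sech y ^ 7 * cos y) + ((sqrt 2 * ((1) + (0) * ln 2)) * (sech y ^ 1 * ln (sech y) * cos y) + ((sqrt 2 * ((-19) + (0) * ln 2)) * (sech y ^ 3 * ln (sech y) * cos y) + ((sqrt 2 * ((48) + (0) * ln 2)) * (sech y ^ 5 * ln (sech y) * cos y) + ((sqrt 2 * ((-30) + (0) * ln 2)) * (sech y ^ 7 * ln (sech y) * cos y) + ((sqrt 2 * ((-1) + (0) * ln 2)) * (y * sech y ^ 1 * tanh y * cos y) + ((sqrt 2 * ((56) + (0) * ln 2)) * (y * sech y ^ 3 * tanh y * cos y) + ((sqrt 2 * ((-222) + (0) * ln 2)) * (y * sech y ^ 5 * tanh y * cos y) + ((sqrt 2 * ((180) + (0) * ln 2)) * (y * sech y ^ 7 * tanh y * cos y) + (((4) + (0) * ln 2) * (sech y ^ 1 * T y * cos y) + (((-4) + (0) * ln 2) * (sech y ^ 3 * T y * cos y) + (((-28) + (0) * ln 2) * (sech y ^ 5 * T y * cos y) + (((30) + (0) * ln 2) * (sech y ^ 7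 * T y * cos y) + (((2) + (0) * ln 2) * (sech y ^ 1 * T y * tanh y * sin y) + (((22) + (0) * ln 2) * (sech y ^ 3 * T y * tanh y * sin y) + (((-30) + (0) * ln 2) * (sech y ^ 5 * T y * tanh y * sin y) + hd1 y))))))))))))))))))).

Definition V1 : R :=
  ((sqrt 2 * ((2) + (0) * ln 2)) * p 1 + ((sqrt 2 * ((-97/2) + (-9) * ln 2)) * p 3 + ((sqrt 2 * ((110) + (24) * ln 2)) * p 5 + ((sqrt 2 * ((-127/2) + (-15) * ln 2)) * p 7 + ((sqrt 2 * ((1) + (0) * ln 2)) * q 1 + ((sqrt 2 * ((-19) + (0) * ln 2)) * q 3 + ((sqrt 2 * ((48) + (0) * ln 2)) * q 5 + ((sqrt 2 * ((-30) + (0) * ln 2)) * q 7 + ((sqrt 2 * ((-1) + (0) * ln 2)) * a 1 + ((sqrt 2 * ((56) + (0) * ln 2)) * a 3 + ((sqrt 2 * ((-222) + (0) * ln 2)) * a 5 + ((sqrt 2 * ((180) + (0) * ln 2)) * a 7 + (((4) + (0) * ln 2) * r 1 + (((-4) + (0) * ln 2) * r 3 + (((-28) + (0) * ln 2) * r 5 + (((30) + (0) * ln 2) * r 7 + (((2) + (0) * ln 2) * s 1 + (((22) + (0) * ln 2) * s 3 + (((-30) + (0) * ln 2) * s 5 + 0))))))))))))))))))).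

Definition QS1 (y : R) : R :=
  ((3) * (sech y) * (tanh y) * (sin y) * (T y)
   + (-2) * (sech y) * (tanh y) ^ 2 * (sin y) * (dT y)
   + (5/8) * (sech y) ^ 3 * (cos y) * (sqrt 2)
   + (1/4) * (sech y) ^ 3 * (cos y) * (sqrt 2) * (ln 2)
   + (-3) * (sech y) ^ 3 * (cos y) * (T y)
   + (-3/2) * (sech y) ^ 3 * (cos y) * (T y) * (sqrt 2) ^ 2
   + (1/2) * (sech y) ^ 3 * (cos y) * (ln (sech y)) * (sqrt 2)
   + (15/4) * (sech y) ^ 3 * (tanh y) * (sin y) * (sqrt 2)
   + (3/2) * (sech y) ^ 3 * (tanh y) * (sin y) * (sqrt 2) * (ln 2)
   + (-6) * (sech y) ^ 3 * (tanh y) * (sin y) * (T y)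
   + (-3) * (sech y) ^ 3 * (tanh y) * (sin y) * (T y) * (sqrt 2) ^ 2
   + (3) * (sech y) ^ 3 * (tanh y) * (sin y) * (ln (sech y)) * (sqrt 2)
   + (2) * (sech y) ^ 3 * (tanh y) * (cos y) * (dT y)
   + (1) * (sech y) ^ 3 * (tanh y) * (cos y) * (dT y) * (sqrt 2) ^ 2
   + (3) * (sech y) ^ 3 * (tanh y) ^ 2 * (sin y) * (dT y)
   + (3/2) * (sech y) ^ 3 * (tanh y) ^ 2 * (sin y) * (dT y) * (sqrt 2) ^ 2
   + (-15/4) * (sech y) ^ 5 * (cos y) * (sqrt 2)
   + (-3/2) * (sech y) ^ 5 * (cos y) * (sqrt 2) * (ln 2)
   + (-15/8) * (sech y) ^ 5 * (cos y) * (sqrt 2) ^ 3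
   + (-3/4) * (sech y) ^ 5 * (cos y) * (sqrt 2) ^ 3 * (ln 2)
   + (6) * (sech y) ^ 5 * (cos y) * (T y)
   + (3) * (sech y) ^ 5 * (cos y) * (T y) * (sqrt 2) ^ 2
   + (3/2) * (sech y) ^ 5 * (cos y) * (T y) * (sqrt 2) ^ 4
   + (-3) * (sech y) ^ 5 * (cos y) * (ln (sech y)) * (sqrt 2)
   + (-3/2) * (sech y) ^ 5 * (cos y) * (ln (sech y)) * (sqrt 2) ^ 3
   + (-11/4) * (sech y) ^ 5 * (tanh y) * (sin y) * (sqrt 2)
   + (-3/2) * (sech y) ^ 5 * (tanh y) * (sin y) * (sqrt 2) * (ln 2)
   + (-11/8) * (sech y) ^ 5 * (tanh y) * (sin y) * (sqrt 2) ^ 3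
   + (-3/4) * (sech y) ^ 5 * (tanh y) * (sin y) * (sqrt 2) ^ 3 * (ln 2)
   + (3) * (sech y) ^ 5 * (tanh y) * (sin y) * (T y)
   + (3/2) * (sech y) ^ 5 * (tanh y) * (sin y) * (T y) * (sqrt 2) ^ 2
   + (3/4) * (sech y) ^ 5 * (tanh y) * (sin y) * (T y) * (sqrt 2) ^ 4
   + (-3) * (sech y) ^ 5 * (tanh y) * (sin y) * (ln (sech y)) * (sqrt 2)
   + (-3/2) * (sech y) ^ 5 * (tanh y) * (sin y) * (ln (sech y)) * (sqrt 2) ^ 3
   + (-3) * (sech y) ^ 5 * (tanh y) * (cos y) * (dT y)
   + (-3/2) * (sech y) ^ 5 * (tanh y) * (cos y) * (dT y) * (sqrt 2) ^ 2
   + (-3/4) * (sech y) ^ 5 * (tanh y) * (cos y) * (dT y) * (sqrt 2) ^ 4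
   + (11/4) * (sech y) ^ 7 * (cos y) * (sqrt 2)
   + (3/2) * (sech y) ^ 7 * (cos y) * (sqrt 2) * (ln 2)
   + (11/8) * (sech y) ^ 7 * (cos y) * (sqrt 2) ^ 3
   + (3/4) * (sech y) ^ 7 * (cos y) * (sqrt 2) ^ 3 * (ln 2)
   + (11/16) * (sech y) ^ 7 * (cos y) * (sqrt 2) ^ 5
   + (3/8) * (sech y) ^ 7 * (cos y) * (sqrt 2) ^ 5 * (ln 2)
   + (-3) * (sech y) ^ 7 * (cos y) * (T y)
   + (-3/2) * (sech y) ^ 7 * (cos y) * (T y) * (sqrt 2) ^ 2
   + (-3/4) * (sech y) ^ 7 * (cos y) * (T y) * (sqrt 2) ^ 4
   + (-3/8) * (sech y) ^ 7 * (cos y) * (T y) * (sqrt 2) ^ 6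
   + (3) * (sech y) ^ 7 * (cos y) * (ln (sech y)) * (sqrt 2)
   + (3/2) * (sech y) ^ 7 * (cos y) * (ln (sech y)) * (sqrt 2) ^ 3
   + (3/4) * (sech y) ^ 7 * (cos y) * (ln (sech y)) * (sqrt 2) ^ 5
   + (-1/2) * y * (sech y) ^ 3 * (tanh y) * (cos y) * (sqrt 2)
   + (-9) * y * (sech y) ^ 3 * (tanh y) ^ 2 * (sin y) * (sqrt 2)
   + (9) * y * (sech y) ^ 5 * (tanh y) * (cos y) * (sqrt 2)
   + (9/2) * y * (sech y) ^ 5 * (tanh y) * (cos y) * (sqrt 2) ^ 3
   + (15) * y * (sech y) ^ 5 * (tanh y) ^ 2 * (sin y) * (sqrt 2)
   + (15/2) * y * (sech y) ^ 5 * (tanh y) ^ 2 * (sin y) * (sqrt 2) ^ 3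
   + (-15) * y * (sech y) ^ 7 * (tanh y) * (cos y) * (sqrt 2)
   + (-15/2) * y * (sech y) ^ 7 * (tanh y) * (cos y) * (sqrt 2) ^ 3
   + (-15/4) * y * (sech y) ^ 7 * (tanh y) * (cos y) * (sqrt 2) ^ 5).

Definition QT1 (y : R) : R :=
  ((-4) * (sech y) * (sin y) * (dT y)
   + (13/8) * (sech y) * (cos y) * (sqrt 2)
   + (1/4) * (sech y) * (cos y) * (sqrt 2) * (ln 2)
   + (1) * (sech y) * (cos y) * (ln (sech y)) * (sqrt 2)
   + (6) * (sech y) ^ 3 * (sin y) * (dT y)
   + (-57/2) * (sech y) ^ 3 * (cos y) * (sqrt 2)
   + (-9) * (sech y) ^ 3 * (cos y) * (sqrt 2) * (ln 2)
   + (12) * (sech y) ^ 3 * (cos y) * (T y)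
   + (-18) * (sech y) ^ 3 * (cos y) * (ln (sech y)) * (sqrt 2)
   + (67/2) * (sech y) ^ 5 * (cos y) * (sqrt 2)
   + (15) * (sech y) ^ 5 * (cos y) * (sqrt 2) * (ln 2)
   + (-30) * (sech y) ^ 5 * (cos y) * (T y)
   + (30) * (sech y) ^ 5 * (cos y) * (ln (sech y)) * (sqrt 2)
   + (1) * y * (sech y) * (sin y) * (sqrt 2)
   + (-18) * y * (sech y) ^ 3 * (sin y) * (sqrt 2)
   + (30) * y * (sech y) ^ 5 * (sin y) * (sqrt 2)).

Lemma is_derive_H1 x : is_derive H1 x (hd1 x).
Proof.
  unfold H1. eapply d_eq. der. cbv beta. unfold hd1.
  match goal with |- ?u = ?v => change (@eq R u v) end. field.
Qed.

Lemma H1_bound x : Rabs (H1 x) <= 1296 * ((1 + Rabs x) * sech x).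
Proof.
  replace (H1 x) with (sech x * Q1 x) by (unfold H1, Q1; field).
  eapply bd_gen. unfold Q1. bd x.
  clean_abs. pose proof (Rabs_pos x). simpl. lra.
Qed.

Lemma hd1_int : is_RInt_gen hd1 Mi Pi 0.
Proof.
  apply (zero_int H1).
  - apply is_derive_H1.
  - intros x. unfold hd1. cont.
  - apply (lim0_m _ _ H1_bound).
  - apply (lim0_p _ _ H1_bound).
Qed.

Lemma G1_int : is_RInt_gen G1 Mi Pi V1.
Proof.
  unfold G1, V1.
  repeat match goal with
  | |- is_RInt_gen _ _ _ (_ + _) => apply lc_plus
  | |- is_RInt_gen _ _ _ (_ * _) => apply lc_scal
  | |- is_RInt_gen _ _ _ (p _) => apply is_p; lia
  | |- is_RInt_gen _ _ _ (q _) => apply is_q; lia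
  | |- is_RInt_gen _ _ _ (r _) => apply is_r; lia
  | |- is_RInt_gen _ _ _ (s _) => apply is_s; lia
  | |- is_RInt_gen _ _ _ (a _) => apply is_a; lia
  | |- is_RInt_gen _ _ _ 0 => apply hd1_int
  end.
Qed.

Lemma pw1 x : Delta1 x * h31 x = G1 x.
Proof.
  cbv beta. prep x. unfold G1, hd1.
  apply (cof _ _ (QS1 x) (QT1 x) (sqrt 2) (tanh x) (sech x) s2_sq (tanh_sech x)).
  unfold QS1, QT1. field.
Qed.

Definition H2 (y : R) : R :=
  ((1/8) * (sech y) * (tanh y) * (cos y) * (sqrt 2)
   + (1/4) * (sech y) * (tanh y) * (cos y) * (sqrt 2) * (ln 2)
   + (1/2) * (sech y) * (tanh y) * (cos y) * (ln (sech y)) * (sqrt 2)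
   + (-1) * (sech y) * (sech y) * (sech y) * (sin y) * (T y)
   + (3/4) * (sech y) * (sech y) * (sech y) * (tanh y) * (cos y) * (sqrt 2)
   + (-1/2) * (sech y) * (sech y) * (sech y) * (tanh y) * (cos y) * (sqrt 2) * (ln 2)
   + (-1) * (sech y) * (sech y) * (sech y) * (tanh y) * (cos y) * (ln (sech y)) * (sqrt 2)
   + (1) * (sech y) * (sech y) * (sech y) * (sech y) * (sech y) * (sin y) * (T y)
   + (-2) * (sech y) * (sech y) * (sech y) * (sech y) * (sech y) * (tanh y) * (cos y) * (sqrt 2)
   + (-1/2) * y * (sech y) * (cos y) * (sqrt 2)
   + (7/2) * y * (sech y) * (sech y) * (sech y) * (cos y) * (sqrt 2)
   + (-3) * y * (sech y) * (sech y) * (sech y) * (sech y) * (sech y) * (cos y) * (sqrt 2)).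

Definition Q2 (y : R) : R :=
  ((1/8) * (tanh y) * (cos y) * (sqrt 2)
   + (1/4) * (tanh y) * (cos y) * (sqrt 2) * (ln 2)
   + (1/2) * (tanh y) * (cos y) * (ln (sech y)) * (sqrt 2)
   + (-1) * (sech y) ^ 2 * (sin y) * (T y)
   + (3/4) * (sech y) ^ 2 * (tanh y) * (cos y) * (sqrt 2)
   + (-1/2) * (sech y) ^ 2 * (tanh y) * (cos y) * (sqrt 2) * (ln 2)
   + (-1) * (sech y) ^ 2 * (tanh y) * (cos y) * (ln (sech y)) * (sqrt 2)
   + (1) * (sech y) ^ 4 * (sin y) * (T y)
   + (-2) * (sech y) ^ 4 * (tanh y) * (cos y) * (sqrt 2)
   + (-1/2) * y * (cos y) * (sqrt 2)
   + (7/2) * y * (sech y) ^ 2 * (cos y) * (sqrt 2)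
   + (-3) * y * (sech y) ^ 4 * (cos y) * (sqrt 2)).

Definition hd2 (y : R) : R :=
  ((-1/2) * (sech y) * (cos y) * (sqrt 2)
   + (-1/8) * (sech y) * (tanh y) * (sin y) * (sqrt 2)
   + (-1/4) * (sech y) * (tanh y) * (sin y) * (sqrt 2) * (ln 2)
   + (-1/2) * (sech y) * (tanh y) * (sin y) * (ln (sech y)) * (sqrt 2)
   + (-5/8) * (sech y) * (tanh y) ^ 2 * (cos y) * (sqrt 2)
   + (-1/4) * (sech y) * (tanh y) ^ 2 * (cos y) * (sqrt 2) * (ln 2)
   + (-1/2) * (sech y) * (tanh y) ^ 2 * (cos y) * (ln (sech y)) * (sqrt 2)
   + (-1) * (sech y) ^ 3 * (sin y) * (dT y)
   + (29/8) * (sech y) ^ 3 * (cos y) * (sqrt 2)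
   + (1/4) * (sech y) ^ 3 * (cos y) * (sqrt 2) * (ln 2)
   + (-1) * (sech y) ^ 3 * (cos y) * (T y)
   + (1/2) * (sech y) ^ 3 * (cos y) * (ln (sech y)) * (sqrt 2)
   + (-3/4) * (sech y) ^ 3 * (tanh y) * (sin y) * (sqrt 2)
   + (1/2) * (sech y) ^ 3 * (tanh y) * (sin y) * (sqrt 2) * (ln 2)
   + (3) * (sech y) ^ 3 * (tanh y) * (sin y) * (T y)
   + (1) * (sech y) ^ 3 * (tanh y) * (sin y) * (ln (sech y)) * (sqrt 2)
   + (-5/4) * (sech y) ^ 3 * (tanh y) ^ 2 * (cos y) * (sqrt 2)
   + (3/2) * (sech y) ^ 3 * (tanh y) ^ 2 * (cos y) * (sqrt 2) * (ln 2)
   + (3) * (sech y) ^ 3 * (tanh y) ^ 2 * (cos y) * (ln (sech y)) * (sqrt 2)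
   + (1) * (sech y) ^ 5 * (sin y) * (dT y)
   + (-9/4) * (sech y) ^ 5 * (cos y) * (sqrt 2)
   + (-1/2) * (sech y) ^ 5 * (cos y) * (sqrt 2) * (ln 2)
   + (1) * (sech y) ^ 5 * (cos y) * (T y)
   + (-1) * (sech y) ^ 5 * (cos y) * (ln (sech y)) * (sqrt 2)
   + (2) * (sech y) ^ 5 * (tanh y) * (sin y) * (sqrt 2)
   + (-5) * (sech y) ^ 5 * (tanh y) * (sin y) * (T y)
   + (10) * (sech y) ^ 5 * (tanh y) ^ 2 * (cos y) * (sqrt 2)
   + (-2) * (sech y) ^ 7 * (cos y) * (sqrt 2)
   + (1/2) * y * (sech y) * (sin y) * (sqrt 2)
   + (1/2) * y * (sech y) * (tanh y) * (cos y) * (sqrt 2)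
   + (-7/2) * y * (sech y) ^ 3 * (sin y) * (sqrt 2)
   + (-21/2) * y * (sech y) ^ 3 * (tanh y) * (cos y) * (sqrt 2)
   + (3) * y * (sech y) ^ 5 * (sin y) * (sqrt 2)
   + (15) * y * (sech y) ^ 5 * (tanh y) * (cos y) * (sqrt 2)).

Definition G2 (y : R) : R :=
  ((sqrt 2 * ((9/8) + (1/4) * ln 2)) * (sech y ^ 1 * cos y) + ((sqrt 2 * ((-3) + (-2) * ln 2)) * (sech y ^ 3 * cos y) + ((sqrt 2 * ((-9) + (2) * ln 2)) * (sech y ^ 5 * cos y) + ((sqrt 2 * ((12) + (0) * ln 2)) * (sech y ^ 7 * cos y) + ((sqrt 2 * ((1/2) + (0) * ln 2)) * (sech y ^ 1 * ln (sech y) * cos y) + ((sqrt 2 * ((-4) + (0) * ln 2)) * (sech y ^ 3 * ln (sech y) * cos y) + ((sqrt 2 * ((4) + (0) * ln 2)) * (sech y ^ 5 * ln (sech y) * cos y) + ((sqrt 2 * ((-1/2) + (0) * ln 2)) * (y * sech y ^ 1 * tanh y * cos y) + ((sqrt 2 * ((21/2) + (0) * ln 2)) * (y * sech y ^ 3 * tanh y * cos y) + ((sqrt 2 * ((-15) + (0) * ln 2)) * (y * sech y ^ 5 * tanh y * cos y) + (((1) + (0) * ln 2) * (sech y ^ 3 * T y * cos y) + (((-1) + (0) * ln 2) * (sech y ^ 5 * T y * cos y) + (((-2) + (0) * ln 2) * (sech y ^ 3 * T y * tanh y * sin y) + (((5) + (0) * ln 2) * (sech y ^ 5 * T y * tanh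 y * sin y) + hd2 y)))))))))))))).

Definition V2 : R :=
  ((sqrt 2 * ((9/8) + (1/4) * ln 2)) * p 1 + ((sqrt 2 * ((-3) + (-2) * ln 2)) * p 3 + ((sqrt 2 * ((-9) + (2) * ln 2)) * p 5 + ((sqrt 2 * ((12) + (0) * ln 2)) * p 7 + ((sqrt 2 * ((1/2) + (0) * ln 2)) * q 1 + ((sqrt 2 * ((-4) + (0) * ln 2)) * q 3 + ((sqrt 2 * ((4) + (0) * ln 2)) * q 5 + ((sqrt 2 * ((-1/2) + (0) * ln 2)) * a 1 + ((sqrt 2 * ((21/2) + (0) * ln 2)) * a 3 + ((sqrt 2 * ((-15) + (0) * ln 2)) * a 5 + (((1) + (0) * ln 2) * r 3 + (((-1) + (0) * ln 2) * r 5 + (((-2) + (0) * ln 2) * s 3 + (((5) + (0) * ln 2) * s 5 + 0)))))))))))))).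

Definition QS2 (y : R) : R :=
  ((-3/8) * (sech y) ^ 3 * (tanh y) * (sin y) * (sqrt 2)
   + (1/4) * (sech y) ^ 3 * (tanh y) * (sin y) * (sqrt 2) * (ln 2)
   + (1/2) * (sech y) ^ 3 * (tanh y) * (sin y) * (T y)
   + (1/4) * (sech y) ^ 3 * (tanh y) * (sin y) * (T y) * (sqrt 2) ^ 2
   + (1/2) * (sech y) ^ 3 * (tanh y) * (sin y) * (ln (sech y)) * (sqrt 2)
   + (-1/2) * (sech y) ^ 3 * (tanh y) ^ 2 * (sin y) * (dT y)
   + (-1/4) * (sech y) ^ 3 * (tanh y) ^ 2 * (sin y) * (dT y) * (sqrt 2) ^ 2
   + (1) * (sech y) ^ 5 * (tanh y) * (sin y) * (sqrt 2)
   + (1/2) * (sech y) ^ 5 * (tanh y) * (sin y) * (sqrt 2) ^ 3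
   + (-3/2) * y * (sech y) ^ 3 * (tanh y) ^ 2 * (sin y) * (sqrt 2)).

Definition QT2 (y : R) : R :=
  ((5/8) * (sech y) * (cos y) * (sqrt 2)
   + (1/4) * (sech y) * (cos y) * (sqrt 2) * (ln 2)
   + (1/2) * (sech y) * (cos y) * (ln (sech y)) * (sqrt 2)
   + (-1) * (sech y) ^ 3 * (sin y) * (dT y)
   + (5/4) * (sech y) ^ 3 * (cos y) * (sqrt 2)
   + (-3/2) * (sech y) ^ 3 * (cos y) * (sqrt 2) * (ln 2)
   + (-3) * (sech y) ^ 3 * (cos y) * (ln (sech y)) * (sqrt 2)
   + (-10) * (sech y) ^ 5 * (cos y) * (sqrt 2)
   + (1/2) * y * (sech y) * (sin y) * (sqrt 2)
   + (-3) * y * (sech y) ^ 3 * (sin y) * (sqrt 2)).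

Lemma is_derive_H2 x : is_derive H2 x (hd2 x).
Proof.
  unfold H2. eapply d_eq. der. cbv beta. unfold hd2.
  match goal with |- ?u = ?v => change (@eq R u v) end. field.
Qed.

Lemma H2_bound x : Rabs (H2 x) <= 115 * ((1 + Rabs x) * sech x).
Proof.
  replace (H2 x) with (sech x * Q2 x) by (unfold H2, Q2; field).
  eapply bd_gen. unfold Q2. bd x.
  clean_abs. pose proof (Rabs_pos x). simpl. lra.
Qed.

Lemma hd2_int : is_RInt_gen hd2 Mi Pi 0.
Proof.
  apply (zero_int H2).
  - apply is_derive_H2.
  - intros x. unfold hd2. cont.
  - apply (lim0_m _ _ H2_bound).
  - apply (lim0_p _ _ H2_bound).
Qed.

Lemma G2_int : is_RInt_gen G2 Mi Pi V2.
Proof.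
  unfold G2, V2.
  repeat match goal with
  | |- is_RInt_gen _ _ _ (_ + _) => apply lc_plus
  | |- is_RInt_gen _ _ _ (_ * _) => apply lc_scal
  | |- is_RInt_gen _ _ _ (p _) => apply is_p; lia
  | |- is_RInt_gen _ _ _ (q _) => apply is_q; lia
  | |- is_RInt_gen _ _ _ (r _) => apply is_r; lia
  | |- is_RInt_gen _ _ _ (s _) => apply is_s; lia
  | |- is_RInt_gen _ _ _ (a _) => apply is_a; lia
  | |- is_RInt_gen _ _ _ 0 => apply hd2_int
  end.
Qed.

Lemma pw2 x : Delta2 x * h32 x = G2 x.
Proof.
  cbv beta. prep x. unfold G2, hd2.
  apply (cof _ _ (QS2 x) (QT2 x) (sqrt 2) (tanh x) (sech x) s2_sq (tanh_sech x)).
  unfold QS2, QT2. field.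
Qed.

Definition H3 (y : R) : R :=
  ((-7/2) * (sech y) * (sech y) * (sech y) * (tanh y) * (cos y) * (sqrt 2)
   + (7) * (sech y) * (sech y) * (sech y) * (sech y) * (sech y) * (tanh y) * (cos y) * (sqrt 2)
   + (6) * y * (sech y) * (sech y) * (sech y) * (cos y) * (sqrt 2)
   + (-18) * y * (sech y) * (sech y) * (sech y) * (sech y) * (sech y) * (cos y) * (sqrt 2)
   + (12) * y * (sech y) * (sech y) * (sech y) * (sech y) * (sech y) * (sech y) * (sech y) * (cos y) * (sqrt 2)).

Definition Q3 (y : R) : R :=
  ((-7/2) * (sech y) ^ 2 * (tanh y) * (cos y) * (sqrt 2)
   + (7) * (sech y) ^ 4 * (tanh y) * (cos y) * (sqrt 2)
   + (6) * y * (sech y) ^ 2 * (cos y) * (sqrt 2)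
   + (-18) * y * (sech y) ^ 4 * (cos y) * (sqrt 2)
   + (12) * y * (sech y) ^ 6 * (cos y) * (sqrt 2)).

Definition hd3 (y : R) : R :=
  ((6) * (sech y) ^ 3 * (cos y) * (sqrt 2)
   + (7/2) * (sech y) ^ 3 * (tanh y) * (sin y) * (sqrt 2)
   + (21/2) * (sech y) ^ 3 * (tanh y) ^ 2 * (cos y) * (sqrt 2)
   + (-43/2) * (sech y) ^ 5 * (cos y) * (sqrt 2)
   + (-7) * (sech y) ^ 5 * (tanh y) * (sin y) * (sqrt 2)
   + (-35) * (sech y) ^ 5 * (tanh y) ^ 2 * (cos y) * (sqrt 2)
   + (19) * (sech y) ^ 7 * (cos y) * (sqrt 2)
   + (-6) * y * (sech y) ^ 3 * (sin y) * (sqrt 2)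
   + (-18) * y * (sech y) ^ 3 * (tanh y) * (cos y) * (sqrt 2)
   + (18) * y * (sech y) ^ 5 * (sin y) * (sqrt 2)
   + (90) * y * (sech y) ^ 5 * (tanh y) * (cos y) * (sqrt 2)
   + (-12) * y * (sech y) ^ 7 * (sin y) * (sqrt 2)
   + (-84) * y * (sech y) ^ 7 * (tanh y) * (cos y) * (sqrt 2)).

Definition G3 (y : R) : R :=
  ((sqrt 2 * ((-33/2) + (0) * ln 2)) * (sech y ^ 3 * cos y) + ((sqrt 2 * ((127/2) + (0) * ln 2)) * (sech y ^ 5 * cos y) + ((sqrt 2 * ((-47) + (0) * ln 2)) * (sech y ^ 7 * cos y) + ((sqrt 2 * ((18) + (0) * ln 2)) * (y * sech y ^ 3 * tanh y * cos y) + ((sqrt 2 * ((-84) + (0) * ln 2)) * (y * sech y ^ 5 * tanh y * cos y) + ((sqrt 2 * ((72) + (0) * ln 2)) * (y * sech y ^ 7 * tanh y * cos y) + hd3 y)))))).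

Definition V3 : R :=
  ((sqrt 2 * ((-33/2) + (0) * ln 2)) * p 3 + ((sqrt 2 * ((127/2) + (0) * ln 2)) * p 5 + ((sqrt 2 * ((-47) + (0) * ln 2)) * p 7 + ((sqrt 2 * ((18) + (0) * ln 2)) * a 3 + ((sqrt 2 * ((-84) + (0) * ln 2)) * a 5 + ((sqrt 2 * ((72) + (0) * ln 2)) * a 7 + 0)))))).

Definition QS3 (y : R) : R :=
  ((-7/4) * (sech y) ^ 5 * (cos y) * (sqrt 2)
   + (-7/2) * (sech y) ^ 5 * (tanh y) * (sin y) * (sqrt 2)
   + (7/2) * (sech y) ^ 7 * (cos y) * (sqrt 2)
   + (7/4) * (sech y) ^ 7 * (cos y) * (sqrt 2) ^ 3
   + (3) * y * (sech y) ^ 5 * (tanh y) * (cos y) * (sqrt 2)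
   + (6) * y * (sech y) ^ 5 * (tanh y) ^ 2 * (sin y) * (sqrt 2)
   + (-6) * y * (sech y) ^ 7 * (tanh y) * (cos y) * (sqrt 2)
   + (-3) * y * (sech y) ^ 7 * (tanh y) * (cos y) * (sqrt 2) ^ 3).

Definition QT3 (y : R) : R :=
  ((-21/2) * (sech y) ^ 3 * (cos y) * (sqrt 2)
   + (35) * (sech y) ^ 5 * (cos y) * (sqrt 2)
   + (-6) * y * (sech y) ^ 3 * (sin y) * (sqrt 2)
   + (12) * y * (sech y) ^ 5 * (sin y) * (sqrt 2)).

Lemma is_derive_H3 x : is_derive H3 x (hd3 x).
Proof.
  unfold H3. eapply d_eq. der. cbv beta. unfold hd3.
  match goal with |- ?u = ?v => change (@eq R u v) end. field.
Qed.

Lemma H3_bound x : Rabs (H3 x) <= 374 * ((1 + Rabs x) * sech x).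
Proof.
  replace (H3 x) with (sech x * Q3 x) by (unfold H3, Q3; field).
  eapply bd_gen. unfold Q3. bd x.
  clean_abs. pose proof (Rabs_pos x). simpl. lra.
Qed.

Lemma hd3_int : is_RInt_gen hd3 Mi Pi 0.
Proof.
  apply (zero_int H3).
  - apply is_derive_H3.
  - intros x. unfold hd3. cont.
  - apply (lim0_m _ _ H3_bound).
  - apply (lim0_p _ _ H3_bound).
Qed.

Lemma G3_int : is_RInt_gen G3 Mi Pi V3.
Proof.
  unfold G3, V3.
  repeat match goal with
  | |- is_RInt_gen _ _ _ (_ + _) => apply lc_plus
  | |- is_RInt_gen _ _ _ (_ * _) => apply lc_scal
  | |- is_RInt_gen _ _ _ (p _) => apply is_p; lia
  | |- is_RInt_gen _ _ _ (q _) => apply is_q; lia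
  | |- is_RInt_gen _ _ _ (r _) => apply is_r; lia
  | |- is_RInt_gen _ _ _ (s _) => apply is_s; lia
  | |- is_RInt_gen _ _ _ (a _) => apply is_a; lia
  | |- is_RInt_gen _ _ _ 0 => apply hd3_int
  end.
Qed.

Lemma pw3 x : (fun x => (6 * x * tanh x * sech x ^ 2 - 7 / 2 * sech x ^ 2) * phi3 x * (1 - phi3 x ^ 2)) x * h31 x = G3 x.
Proof.
  cbv beta. prep x. unfold G3, hd3.
  apply (cof _ _ (QS3 x) (QT3 x) (sqrt 2) (tanh x) (sech x) s2_sq (tanh_sech x)).
  unfold QS3, QT3. field.
Qed.

Definition H4 (y : R) : R :=
  ((1/16) * (sech y) * (sin y) * (sqrt 2)
   + (-1/8) * (sech y) * (sin y) * (sqrt 2) * (ln 2)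
   + (1/16) * (sech y) * (tanh y) * (cos y) * (sqrt 2)
   + (-1/8) * (sech y) * (tanh y) * (cos y) * (sqrt 2) * (ln 2)
   + (-1/2) * (sech y) * (tanh y) * (cos y) * (ln (sech y)) * (sqrt 2)
   + (-1/2) * y * (sech y) * (cos y) * (sqrt 2)
   + (1/2) * y * (sech y) * (sech y) * (sech y) * (cos y) * (sqrt 2)).

Definition Q4 (y : R) : R :=
  ((1/16) * (sin y) * (sqrt 2)
   + (-1/8) * (sin y) * (sqrt 2) * (ln 2)
   + (1/16) * (tanh y) * (cos y) * (sqrt 2)
   + (-1/8) * (tanh y) * (cos y) * (sqrt 2) * (ln 2)
   + (-1/2) * (tanh y) * (cos y) * (ln (sech y)) * (sqrt 2)
   + (-1/2) * y * (cos y) * (sqrt 2)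
   + (1/2) * y * (sech y) ^ 2 * (cos y) * (sqrt 2)).

Definition hd4 (y : R) : R :=
  ((-7/16) * (sech y) * (cos y) * (sqrt 2)
   + (-1/8) * (sech y) * (cos y) * (sqrt 2) * (ln 2)
   + (-1/8) * (sech y) * (tanh y) * (sin y) * (sqrt 2)
   + (1/4) * (sech y) * (tanh y) * (sin y) * (sqrt 2) * (ln 2)
   + (1/2) * (sech y) * (tanh y) * (sin y) * (ln (sech y)) * (sqrt 2)
   + (7/16) * (sech y) * (tanh y) ^ 2 * (cos y) * (sqrt 2)
   + (1/8) * (sech y) * (tanh y) ^ 2 * (cos y) * (sqrt 2) * (ln 2)
   + (1/2) * (sech y) * (tanh y) ^ 2 * (cos y) * (ln (sech y)) * (sqrt 2)
   + (9/16) * (sech y) ^ 3 * (cos y) * (sqrt 2)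
   + (-1/8) * (sech y) ^ 3 * (cos y) * (sqrt 2) * (ln 2)
   + (-1/2) * (sech y) ^ 3 * (cos y) * (ln (sech y)) * (sqrt 2)
   + (1/2) * y * (sech y) * (sin y) * (sqrt 2)
   + (1/2) * y * (sech y) * (tanh y) * (cos y) * (sqrt 2)
   + (-1/2) * y * (sech y) ^ 3 * (sin y) * (sqrt 2)
   + (-3/2) * y * (sech y) ^ 3 * (tanh y) * (cos y) * (sqrt 2)).

Definition G4 (y : R) : R :=
  ((sqrt 2 * ((-1/2) + (0) * ln 2)) * (sech y ^ 1 * ln (sech y) * cos y) + ((sqrt 2 * ((1/2) + (0) * ln 2)) * (sech y ^ 3 * ln (sech y) * cos y) + ((sqrt 2 * ((-1/2) + (0) * ln 2)) * (y * sech y ^ 1 * tanh y * cos y) + ((sqrt 2 * ((1) + (0) * ln 2)) * (y * sech y ^ 3 * tanh y * cos y) + hd4 y)))).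

Definition V4 : R :=
  ((sqrt 2 * ((-1/2) + (0) * ln 2)) * q 1 + ((sqrt 2 * ((1/2) + (0) * ln 2)) * q 3 + ((sqrt 2 * ((-1/2) + (0) * ln 2)) * a 1 + ((sqrt 2 * ((1) + (0) * ln 2)) * a 3 + 0)))).

Definition QS4 (y : R) : R :=
  ((1/16) * (sech y) ^ 3 * (cos y) * (sqrt 2)
   + (-1/8) * (sech y) ^ 3 * (cos y) * (sqrt 2) * (ln 2)
   + (-1/4) * (sech y) ^ 3 * (cos y) * (ln (sech y)) * (sqrt 2)
   + (-1/4) * y * (sech y) ^ 3 * (tanh y) * (cos y) * (sqrt 2)).

Definition QT4 (y : R) : R :=
  ((-7/16) * (sech y) * (cos y) * (sqrt 2)
   + (-1/8) * (sech y) * (cos y) * (sqrt 2) * (ln 2)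
   + (-1/2) * (sech y) * (cos y) * (ln (sech y)) * (sqrt 2)
   + (1/2) * y * (sech y) * (sin y) * (sqrt 2)).

Lemma is_derive_H4 x : is_derive H4 x (hd4 x).
Proof.
  unfold H4. eapply d_eq. der. cbv beta. unfold hd4.
  match goal with |- ?u = ?v => change (@eq R u v) end. field.
Qed.

Lemma H4_bound x : Rabs (H4 x) <= 17 * ((1 + Rabs x) * sech x).
Proof.
  replace (H4 x) with (sech x * Q4 x) by (unfold H4, Q4; field).
  eapply bd_gen. unfold Q4. bd x.
  clean_abs. pose proof (Rabs_pos x). simpl. lra.
Qed.

Lemma hd4_int : is_RInt_gen hd4 Mi Pi 0.
Proof.
  apply (zero_int H4).
  - apply is_derive_H4.
  - intros x. unfold hd4. cont.
  - apply (lim0_m _ _ H4_bound).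
  - apply (lim0_p _ _ H4_bound).
Qed.

Lemma G4_int : is_RInt_gen G4 Mi Pi V4.
Proof.
  unfold G4, V4.
  repeat match goal with
  | |- is_RInt_gen _ _ _ (_ + _) => apply lc_plus
  | |- is_RInt_gen _ _ _ (_ * _) => apply lc_scal
  | |- is_RInt_gen _ _ _ (p _) => apply is_p; lia
  | |- is_RInt_gen _ _ _ (q _) => apply is_q; lia
  | |- is_RInt_gen _ _ _ (r _) => apply is_r; lia
  | |- is_RInt_gen _ _ _ (s _) => apply is_s; lia
  | |- is_RInt_gen _ _ _ (a _) => apply is_a; lia
  | |- is_RInt_gen _ _ _ 0 => apply hd4_int
  end.
Qed.

Lemma pw4 x : E x * h31 x = G4 x.
Proof.
  cbv beta. prep x. unfold G4, hd4.
  apply (cof _ _ (QS4 x) (QT4 x) (sqrt 2) (tanh x) (sech x) s2_sq (tanh_sech x)).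
  unfold QS4, QT4. field.
Qed.

Theorem lemma2p20 :
  gamma1 =
    sqrt 2 * (2 * p 1 + (- 9 * ln 2 - 97 / 2) * p 3 + (24 * ln 2 + 110) * p 5
              + (- 15 * ln 2 - 127 / 2) * p 7)
    + sqrt 2 * (q 1 - 19 * q 3 + 48 * q 5 - 30 * q 7
                - a 1 + 56 * a 3 - 222 * a 5 + 180 * a 7)
    + 4 * r 1 - 4 * r 3 - 28 * r 5 + 30 * r 7 + 2 * s 1 + 22 * s 3 - 30 * s 5
  /\
  gamma2 =
    sqrt 2 * ((/ 2 * ln 2 + 9 / 4) * p 1 + (- 4 * ln 2 - 6) * p 3
              + (4 * ln 2 - 18) * p 5 + 24 * p 7)
    + sqrt 2 * (q 1 - 8 * q 3 + 8 * q 5 - a 1 + 21 * a 3 - 30 * a 5)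
    + 2 * r 3 - 2 * r 5 - 4 * s 3 + 10 * s 5
  /\
  gamma3 =
    sqrt 2 * (- 33 / 2 * p 3 + 127 / 2 * p 5 - 47 * p 7
              + 18 * a 3 - 84 * a 5 + 72 * a 7)
  /\
  gamma4 = sqrt 2 * (q 1 - q 3 + a 1 - 2 * a 3).
Proof.
  split; [|split; [|split]].
  - unfold gamma1, ip.
    rewrite (Integral_ext _ G1) by (intro x; apply pw1).
    rewrite (Integral_is _ _ G1_int). unfold V1. field.
  - unfold gamma2, ip.
    rewrite (Integral_ext _ G2) by (intro x; apply pw2).
    rewrite (Integral_is _ _ G2_int). unfold V2. field.
  - unfold gamma3, ip.
    rewrite (Integral_ext _ G3) by (intro x; apply pw3).
    rewrite (Integral_is _ _ G3_int). unfold V3. field.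
  - unfold gamma4, ip.
    rewrite (Integral_ext _ G4) by (intro x; apply pw4).
    rewrite (Integral_is _ _ G4_int). unfold V4. field.
Qed.
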